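(* Let $\theta$ be an irrational number whose best rational approximants $(p_n/q_n)_{n\ge0}$ satisfy $\lim_{n\to\infty} q_n^{-1}\log q_{n+1}=+\infty$. Let $S$ be a countable dense subset of $\mathbb{C}\times\{z\in\mathbb{C}: |z|>1\}$. Then there exist a subsequence $q'=(q'_n)_{n\ge0}$ of $(q_n)_{n\ge0}$ and a dense $G_\delta$-subset $E_2\subset l^\infty$ such that for every $u\in E_2$, the map $A_{\theta,q',u}$ is a holomorphic automorphism of $\mathbb{C}^2$ with the following properties: (i) $A_{\theta,q',u}$ maps $\mathbb{C}\times\Delta$ onto itself and is holomorphically conjugate on $\mathbb{C}\times\Delta$ to the rotation $R_\theta(w,z)=(e^{2\pi i\theta}w,e^{2\pi i\theta}z)$, i.e. there is a biholomorphism $\Psi$ of $\mathbb{C}\times\Delta$ with $A_{\theta,q',u}=\Psi^{-1}\circ R_\theta\circ\Psi$ there; (ii) for every $(w,z)\in\mathbb{C}\times\{|z|>1\}$ the forward orbit $(A_{\theta,q',u}^{\circ N}(w,z))_{N\ge0}$ is unbounded and recurrent (i.e. $\liminf_{N\to\infty}\|A_{\theta,q',u}^{\circ N}(w,z)-(w,z)\|=0$); (iii) for every $(w,z)\in S$, the sequence $(\|\mathrm{D}A_{\theta,q',u}^{\circ N}(w,z)\|)_{N\ge0}$ is unbounded.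
   Context: For an irrational real $\theta=a_0+\cfrac{1}{a_1+\cfrac{1}{a_2+\cdots}}$ (with $a_0\in\mathbb{Z}$, $a_i\ge1$ integers for $i\ge1$), the best rational approximants are $p_n/q_n=a_0+\cfrac{1}{a_1+\cdots+\cfrac{1}{a_n}}$, $n\ge0$, with $\gcd(p_n,q_n)=1$ and $q_n\ge0$; equivalently $p_{-2}=q_{-1}=0$, $p_{-1}=q_{-2}=1$, $q_{n+1}=a_{n+1}q_n+q_{n-1}$, $p_{n+1}=a_{n+1}p_n+p_{n-1}$. A subsequence $q'=(q'_n)_{n\ge0}$ of $(q_n)$ means $q'_n=q_{k_n}$ for a strictly increasing sequence of indices $k_n$. $l^\infty$ is the complex Banach space of bounded complex sequences $u=(u_m)_{m\ge0}$ with norm $\|u\|_\infty=\sup_m|u_m|$. $\Delta=\{z\in\mathbb{C}:|z|<1\}$. For $\mu\in\mathbb{R}$, a subsequence $q'$ and $u\in l^\infty$, define the power series $\varphi_{\mu,q',u}(z)=z e^{2\pi i\mu}\sum_{n=0}^\infty u_{q'_n}(1-e^{2\pi i q'_n\mu})z^{q'_n}$ (here $u_{q'_n}$ is the $q'_n$-th term of $u$), and $A_{\mu,q',u}(w,z)=(e^{2\pi i\mu}w+\varphi_{\mu,q',u}(z),\,e^{2\pi i\mu}z)$ wherever the series converges. *)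

(* Defs.v *)
From Stdlib Require Import Reals Lra Lia ZArith.
Open Scope R_scope.

Definition CC : Type := (R * R)%type.
Definition Cre (z : CC) : R := fst z.
Definition Cim (z : CC) : R := snd z.
Definition C0 : CC := (0, 0).
Definition C1 : CC := (1, 0).
Definition Cadd (a b : CC) : CC := (fst a + fst b, snd a + snd b).
Definition Copp (a : CC) : CC := (- fst a, - snd a).
Definition Csub (a b : CC) : CC := Cadd a (Copp b).
Definition Cmul (a b : CC) : CC :=
  (fst a * fst b - snd a * snd b, fst a * snd b + snd a * fst b).
Fixpoint Cpow (a : CC) (n : nat) : CC :=
  match n with O => C1 | S m => Cmul a (Cpow a m) end.
Definition Cnorm (a : CC) : R := sqrt (fst a * fst a + snd a * snd a).
Definition Ce (t : R) : CC := (cos (2 * PI * t), sin (2 * PI * t)).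

Fixpoint Csum (c : nat -> CC) (N : nat) : CC :=
  match N with O => C0 | S M => Cadd (Csum c M) (c M) end.

Definition Ccv (s : nat -> CC) (l : CC) : Prop :=
  forall eps : R, eps > 0 -> exists N : nat, forall n : nat, (n >= N)%nat ->
    Cnorm (Csub (s n) l) < eps.

Definition C2 : Type := (CC * CC)%type.
Definition C2add (p q : C2) : C2 := (Cadd (fst p) (fst q), Cadd (snd p) (snd q)).
Definition C2sub (p q : C2) : C2 := (Csub (fst p) (fst q), Csub (snd p) (snd q)).
Definition C2norm (p : C2) : R :=
  sqrt (Cnorm (fst p) * Cnorm (fst p) + Cnorm (snd p) * Cnorm (snd p)).

(** complex 2x2 matrices ((a, b), (c, d)) acting on column vectors *)
Definition Mat2 : Type := ((CC * CC) * (CC * CC))%type.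
Definition Mat2_apply (L : Mat2) (h : C2) : C2 :=
  (Cadd (Cmul (fst (fst L)) (fst h)) (Cmul (snd (fst L)) (snd h)),
   Cadd (Cmul (fst (snd L)) (fst h)) (Cmul (snd (snd L)) (snd h))).
(** Frobenius norm of a 2x2 complex matrix (equivalent to the operator norm) *)
Definition Mat2_norm (L : Mat2) : R :=
  sqrt (Cnorm (fst (fst L)) ^ 2 + Cnorm (snd (fst L)) ^ 2
      + Cnorm (fst (snd L)) ^ 2 + Cnorm (snd (snd L)) ^ 2).

Definition has_cderiv (F : C2 -> C2) (p : C2) (L : Mat2) : Prop :=
  forall eps : R, eps > 0 -> exists delta : R, delta > 0 /\
    forall h : C2, 0 < C2norm h < delta ->
      C2norm (C2sub (C2sub (F (C2add p h)) (F p)) (Mat2_apply L h))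
        <= eps * C2norm h.

Definition open_C2 (U : C2 -> Prop) : Prop :=
  forall p, U p -> exists r, r > 0 /\ forall q, C2norm (C2sub q p) < r -> U q.

Definition holomorphic_on (U : C2 -> Prop) (F : C2 -> C2) : Prop :=
  forall p, U p -> exists L : Mat2, has_cderiv F p L.

Definition holo_automorphism_C2 (F : C2 -> C2) : Prop :=
  holomorphic_on (fun _ => True) F /\
  exists G : C2 -> C2, holomorphic_on (fun _ => True) G /\
    (forall p, G (F p) = p) /\ (forall p, F (G p) = p).

Definition biholo_of (U : C2 -> Prop) (Psi Phi : C2 -> C2) : Prop :=
  (forall p, U p -> U (Psi p)) /\ (forall p, U p -> U (Phi p)) /\
  (forall p, U p -> Phi (Psi p) = p) /\ (forall p, U p -> Psi (Phi p) = p) /\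
  holomorphic_on U Psi /\ holomorphic_on U Phi.

Definition CxDisk (p : C2) : Prop := Cnorm (snd p) < 1.
Definition CxOut (p : C2) : Prop := Cnorm (snd p) > 1.

(** floor, via Int_part (Int_part r = up r - 1 = floor r) *)
Definition floorZ (r : R) : Z := Int_part r.

Fixpoint cf_rem (theta : R) (n : nat) : R :=
  match n with
  | O => theta - IZR (floorZ theta)
  | S m => / cf_rem theta m - IZR (floorZ (/ cf_rem theta m))
  end.

Definition cf_a (theta : R) (n : nat) : Z :=
  match n with
  | O => floorZ theta
  | S m => floorZ (/ cf_rem theta m)
  end.

(** (q_n, q_{n-1}), with q_{-1} = 0, q_{-2} = 1, q_{n+1} = a_{n+1} q_n + q_{n-1} *)
Fixpoint cf_qpair (theta : R) (n : nat) : (Z * Z)%type :=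
  match n with
  | O => (1%Z, 0%Z)
  | S m => let '(q, q') := cf_qpair theta m in
           ((cf_a theta (S m) * q + q')%Z, q)
  end.

(** denominators q_n of the best rational approximants of theta *)
Definition cf_q (theta : R) (n : nat) : Z := fst (cf_qpair theta n).

Definition irrational (theta : R) : Prop :=
  forall (p q : Z), q <> 0%Z -> theta <> IZR p / IZR q.

Definition linf (u : nat -> CC) : Prop := exists M : R, forall m, Cnorm (u m) <= M.

Definition linf_open (O : (nat -> CC) -> Prop) : Prop :=
  (forall u, O u -> linf u) /\
  forall u, O u -> exists r, r > 0 /\
    forall v, linf v -> (forall m, Cnorm (Csub (v m) (u m)) < r) -> O v.

Definition linf_dense (E : (nat -> CC) -> Prop) : Prop :=
  (forall u, E u -> linf u) /\
  forall v, linf v -> forall eps, eps > 0 ->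
    exists u, E u /\ forall m, Cnorm (Csub (u m) (v m)) < eps.

Definition linf_Gdelta (E : (nat -> CC) -> Prop) : Prop :=
  exists O : nat -> (nat -> CC) -> Prop,
    (forall j, linf_open (O j)) /\ forall u, E u <-> (forall j, O j u).

(** n-th term of the series for phi_{mu,q',u}(z) (without the prefactor z e^{2 pi i mu}) *)
Definition phi_term (mu : R) (q' : nat -> nat) (u : nat -> CC) (z : CC) (n : nat) : CC :=
  Cmul (Cmul (u (q' n)) (Csub C1 (Ce (INR (q' n) * mu)))) (Cpow z (q' n)).

(** A_{mu,q',u}, given the value phi of the series *)
Definition A_map (mu : R) (phi : CC -> CC) (p : C2) : C2 :=
  (Cadd (Cmul (Ce mu) (fst p)) (phi (snd p)), Cmul (Ce mu) (snd p)).

Definition Rot (theta : R) (p : C2) : C2 :=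
  (Cmul (Ce theta) (fst p), Cmul (Ce theta) (snd p)).

(* Main.v *)
From Coquelicot Require Import Coquelicot.
From Stdlib Require Import Reals ZArith Lra Lia.
From Stdlib Require Ratan.
From Stdlib Require Import ClassicalEpsilon FunctionalExtensionality.
Require Import Defs.
Open Scope R_scope.

Ltac cdestr := repeat match goal with x : CC |- _ => destruct x end.
Ltac gen_atoms := repeat match goal with
 | |- context [Cpow ?a ?n] => generalize (Cpow a n); intro
 | |- context [Ce ?t] => generalize (Ce t); intro
 end.
Ltac cring := gen_atoms; cdestr; unfold Csub, Copp, Cmul, Cadd, C1, C0 in *; simpl; f_equal; ring.

Lemma Cnorm_ge0 a : 0 <= Cnorm a.
Proof. unfold Cnorm; apply sqrt_pos. Qed.

Lemma Cnorm_Cmod a : Cnorm a = Cmod a.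
Proof. unfold Cnorm, Cmod; f_equal; simpl; ring. Qed.

Lemma Cnorm_mul a b : Cnorm (Cmul a b) = Cnorm a * Cnorm b.
Proof.
  unfold Cnorm; rewrite <- sqrt_mult by (destruct a, b; simpl; nra).
  f_equal; destruct a, b; simpl; ring.
Qed.

Lemma Cnorm_add a b : Cnorm (Cadd a b) <= Cnorm a + Cnorm b.
Proof. rewrite !Cnorm_Cmod. apply Cmod_triangle. Qed.

Lemma Cnorm_opp a : Cnorm (Copp a) = Cnorm a.
Proof. unfold Cnorm, Copp; destruct a; simpl; f_equal; ring. Qed.

Lemma Cnorm_sub a b : Cnorm (Csub a b) <= Cnorm a + Cnorm b.
Proof. unfold Csub. rewrite <- (Cnorm_opp b). apply Cnorm_add. Qed.

Lemma Cnorm_sub_sym a b : Cnorm (Csub a b) = Cnorm (Csub b a).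
Proof. unfold Cnorm; destruct a, b; simpl; f_equal; ring. Qed.

Lemma Cnorm_sub_ge a b : Cnorm a - Cnorm b <= Cnorm (Cadd a b).
Proof.
  assert (a = Cadd (Cadd a b) (Copp b)) as E by cring.
  pose proof (Cnorm_add (Cadd a b) (Copp b)). rewrite <- E, Cnorm_opp in H. lra.
Qed.

Lemma Cnorm_C1 : Cnorm C1 = 1.
Proof. unfold Cnorm, C1; simpl. replace (1*1+0*0) with 1 by ring. apply sqrt_1. Qed.

Lemma Cnorm_C0 : Cnorm C0 = 0.
Proof. unfold Cnorm, C0; simpl. replace (0*0+0*0) with 0 by ring. apply sqrt_0. Qed.

Lemma Cnorm_pow a n : Cnorm (Cpow a n) = Cnorm a ^ n.
Proof. induction n; simpl. apply Cnorm_C1. rewrite Cnorm_mul, IHn. ring. Qed.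

Lemma Cnorm_fst a : Rabs (fst a) <= Cnorm a.
Proof. unfold Cnorm. rewrite <- sqrt_Rsqr_abs. apply sqrt_le_1_alt. unfold Rsqr. destruct a; simpl; nra. Qed.

Lemma Cpow_add a n m : Cpow a (n + m) = Cmul (Cpow a n) (Cpow a m).
Proof. induction n; simpl. cring. rewrite IHn. generalize (Cpow a n) (Cpow a m); intros; cring. Qed.

Lemma Cpow_mul_l a b n : Cpow (Cmul a b) n = Cmul (Cpow a n) (Cpow b n).
Proof. induction n; simpl. cring. rewrite IHn. generalize (Cpow a n) (Cpow b n); intros; cring. Qed.

Lemma Cpow_mul a n m : Cpow a (n * m) = Cpow (Cpow a n) m.
Proof. induction m; simpl. rewrite Nat.mul_0_r. reflexivity.
  rewrite Nat.mul_succ_r, Cpow_add, IHm. generalize (Cpow (Cpow a n) m) (Cpow a n); intros; cring. Qed.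

Lemma Cpow_C1 n : Cpow C1 n = C1.
Proof. induction n; simpl; auto. rewrite IHn; cring. Qed.

Lemma C2norm_ge_fst p : Cnorm (fst p) <= C2norm p.
Proof. unfold C2norm. rewrite <- (sqrt_Rsqr (Cnorm (fst p))) at 1 by apply Cnorm_ge0.
  apply sqrt_le_1_alt. unfold Rsqr. pose proof (Cnorm_ge0 (snd p)). nra. Qed.

Lemma C2norm_ge_snd p : Cnorm (snd p) <= C2norm p.
Proof. unfold C2norm. rewrite <- (sqrt_Rsqr (Cnorm (snd p))) at 1 by apply Cnorm_ge0.
  apply sqrt_le_1_alt. unfold Rsqr. pose proof (Cnorm_ge0 (fst p)). nra. Qed.

Lemma C2norm_le p : C2norm p <= Cnorm (fst p) + Cnorm (snd p).
Proof. unfold C2norm. pose proof (Cnorm_ge0 (fst p)). pose proof (Cnorm_ge0 (snd p)).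
  rewrite <- (sqrt_Rsqr (Cnorm (fst p) + Cnorm (snd p))) by lra.
  apply sqrt_le_1_alt. unfold Rsqr. nra. Qed.

Lemma C2norm_ge0 p : 0 <= C2norm p.
Proof. unfold C2norm; apply sqrt_pos. Qed.

Lemma C2norm_fst0 a b : Cnorm b = 0 -> C2norm (a, b) = Cnorm a.
Proof. intros H. unfold C2norm; simpl. rewrite H. rewrite Rmult_0_r, Rplus_0_r. apply sqrt_square, Cnorm_ge0. Qed.

Lemma Cnorm_eq0 a : Cnorm a = 0 -> a = C0.
Proof. unfold Cnorm; intros H. apply sqrt_eq_0 in H. destruct a as [x y]; simpl in *. unfold C0. f_equal; nra.
  destruct a; simpl; nra. Qed.

Lemma Ce_add s t : Ce (s + t) = Cmul (Ce s) (Ce t).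
Proof. unfold Ce, Cmul; simpl. replace (2*PI*(s+t)) with (2*PI*s + 2*PI*t) by ring.
  rewrite cos_plus, sin_plus. f_equal; ring. Qed.

Lemma Ce_norm t : Cnorm (Ce t) = 1.
Proof. unfold Cnorm, Ce; simpl. rewrite <- sqrt_1. f_equal. pose proof (sin2_cos2 (2*PI*t)). unfold Rsqr in H. lra. Qed.

Lemma Ce_0 : Ce 0 = C1.
Proof. unfold Ce, C1. rewrite Rmult_0_r, cos_0, sin_0. reflexivity. Qed.

Lemma Ce_INR n : Ce (INR n) = C1.
Proof. induction n. simpl. apply Ce_0. rewrite S_INR, Ce_add, IHn.
  unfold Ce. rewrite Rmult_1_r, cos_2PI, sin_2PI. cring. Qed.

Lemma Ce_IZR p : Ce (IZR p) = C1.
Proof. destruct (Z_le_gt_dec 0 p).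
  - rewrite <- (Z2Nat.id p) by lia. rewrite <- INR_IZR_INZ. apply Ce_INR.
  - assert (Ce (IZR p) = Cmul (Ce (IZR p)) (Ce (IZR (- p)))) as E.
    { rewrite <- (Z2Nat.id (-p)) by lia. rewrite <- INR_IZR_INZ, Ce_INR. cring. }
    rewrite E, <- Ce_add, opp_IZR. replace (IZR p + - IZR p) with 0 by ring. apply Ce_0. Qed.

Lemma Cpow_Ce t n : Cpow (Ce t) n = Ce (INR n * t).
Proof. induction n. simpl. rewrite Rmult_0_l, Ce_0. reflexivity.
  simpl Cpow. rewrite IHn, S_INR. replace ((INR n + 1) * t) with (t + INR n * t) by ring. rewrite Ce_add. reflexivity. Qed.

Lemma Ce_neg_norm t : Cnorm (Csub C1 (Ce (- t))) = Cnorm (Csub C1 (Ce t)).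
Proof. unfold Cnorm, Ce, Csub, Cadd, Copp, C1; simpl. replace (2*PI*-t) with (-(2*PI*t)) by ring.
  rewrite cos_neg, sin_neg. f_equal; ring. Qed.

Lemma Rabs_sin_le y : Rabs (sin y) <= Rabs y.
Proof.
  assert (forall y, 0 < y -> Rabs (sin y) <= y).
  { intros x Hx. pose proof (Ratan.sin_lt_x x Hx). pose proof (SIN_bound x).
    destruct (Rle_dec 1 x). apply Rabs_le; lra.
    assert (0 <= sin x). apply sin_ge_0; pose proof PI2_3_2; lra. rewrite Rabs_pos_eq; lra. }
  destruct (Rtotal_order y 0) as [Hl|[He|Hg]].
  - rewrite (Rabs_left y) by lra. replace (sin y) with (- sin (-y)) by (rewrite sin_neg; ring).
    rewrite Rabs_Ropp. apply H; lra.
  - subst. rewrite sin_0, Rabs_R0; lra.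
  - rewrite (Rabs_pos_eq y) by lra. auto.
Qed.

Lemma norm_1_Ce_sq t : Cnorm (Csub C1 (Ce t)) = sqrt (2 - 2 * cos (2*PI*t)).
Proof. unfold Cnorm, Ce, Csub, Cadd, Copp, C1; simpl. f_equal. pose proof (sin2_cos2 (2*PI*t)). unfold Rsqr in H. nra. Qed.

Lemma norm_1_Ce_le t : Cnorm (Csub C1 (Ce t)) <= 2 * PI * Rabs t.
Proof.
  rewrite norm_1_Ce_sq. pose proof PI2_3_2.
  replace (2*PI*t) with (2 * (PI * t)) by ring. rewrite cos_2a_sin.
  pose proof (Rabs_sin_le (PI*t)). rewrite Rabs_mult, (Rabs_pos_eq PI) in H0 by lra.
  rewrite <- (sqrt_Rsqr (2*PI*Rabs t)) by (pose proof (Rabs_pos t); nra).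
  apply sqrt_le_1_alt. unfold Rsqr.
  assert (sin (PI*t) * sin (PI*t) <= (PI * Rabs t)*(PI * Rabs t)).
  { pose proof (Rabs_pos (sin (PI*t))).
    replace (sin (PI*t) * sin (PI*t)) with (Rabs (sin (PI*t)) * Rabs (sin (PI*t))).
    pose proof (Rabs_pos t). nra.
    rewrite <- Rabs_mult. rewrite Rabs_pos_eq by nra. ring. }
  nra.
Qed.

Lemma norm_1_Ce_ge t : 1/6 <= Rabs t <= 1/3 -> 1 <= Cnorm (Csub C1 (Ce t)).
Proof.
  intros H. assert (forall s, 1/6 <= s <= 1/3 -> 1 <= Cnorm (Csub C1 (Ce s))).
  { intros s Hs. rewrite norm_1_Ce_sq. rewrite <- sqrt_1. apply sqrt_le_1_alt.
    pose proof PI2_3_2.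
    assert (cos (2*PI*s) <= cos (PI/3)).
    { destruct (Req_dec (2*PI*s) (PI/3)). rewrite H1; lra.
      left. apply cos_decreasing_1; try nra. }
    rewrite cos_PI3 in H1. lra. }
  destruct (Rle_dec 0 t). rewrite Rabs_pos_eq in H by lra. auto.
  rewrite Rabs_left in H by lra. rewrite <- Ce_neg_norm. apply H0; lra.
Qed.

Lemma Cpow_unit_bound a N : Cnorm a = 1 -> Cnorm (Csub C1 (Cpow a N)) <= INR N * Cnorm (Csub C1 a).
Proof.
  intros Ha. induction N. simpl. replace (Csub C1 C1) with C0 by cring. rewrite Cnorm_C0; lra.
  simpl Cpow. rewrite S_INR.
  replace (Csub C1 (Cmul a (Cpow a N))) with (Cadd (Csub C1 (Cpow a N)) (Cmul (Cpow a N) (Csub C1 a))) by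
    (generalize (Cpow a N); intros; cring).
  eapply Rle_trans. apply Cnorm_add. rewrite Cnorm_mul, Cnorm_pow, Ha, pow1. lra.
Qed.

Definition isC (a : nat -> CC) (l : CC) : Prop := @is_series C_AbsRing C_NormedModule a l.

Definition CSer (a : nat -> CC) : CC := epsilon (inhabits C0) (fun l => isC a l).

Lemma isC_unique a l1 l2 : isC a l1 -> isC a l2 -> l1 = l2.
Proof. intros H1 H2. eapply (@filterlim_locally_unique nat C_AbsRing C_NormedModule Hierarchy.eventually _ (sum_n a)); eauto.
Qed.

Lemma CSer_eq a l : isC a l -> CSer a = l.
Proof. intros H. unfold CSer. apply isC_unique with a; auto. apply epsilon_spec. exists l; auto. Qed.

Lemma isC_exists a : ex_series (fun n => Cnorm (a n)) -> exists l, isC a l.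
Proof. intros H. apply (@ex_series_le C_AbsRing C_CompleteNormedModule a (fun n => Cnorm (a n))); auto.
  intros n. rewrite Cnorm_Cmod. apply Rle_refl. Qed.

Lemma CSer_spec a : ex_series (fun n => Cnorm (a n)) -> isC a (CSer a).
Proof. intros H. destruct (isC_exists a H) as [l Hl]. rewrite (CSer_eq a l Hl). auto. Qed.

Lemma Csum_sum_n a n : Csum a (S n) = @sum_n C_AbelianMonoid a n.
Proof. induction n. simpl. rewrite sum_O. generalize (a 0%nat); intros; cring.
  rewrite sum_Sn. change (Csum a (S (S n))) with (Cadd (Csum a (S n)) (a (S n))). rewrite IHn. reflexivity. Qed.

Lemma norm_sum_n_le (a : nat -> CC) n : Cnorm (@sum_n C_AbelianMonoid a n) <= sum_n (fun k => Cnorm (a k)) n.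
Proof. induction n. rewrite !sum_O. lra.
  rewrite !sum_Sn. eapply Rle_trans. apply Cnorm_add. simpl. unfold plus; simpl. lra. Qed.

Lemma isC_norm_le a l c : isC a l -> ex_series c -> (forall n, Cnorm (a n) <= c n) -> Cnorm l <= Series c.
Proof.
  intros Ha Hc Hle.
  assert (H1 : is_lim_seq (fun n => Cnorm (@sum_n C_AbelianMonoid a n)) (Cnorm l)).
  { unfold is_lim_seq. simpl.
    apply (filterlim_comp _ _ _ (@sum_n C_AbelianMonoid a) (fun x => Cnorm x) Hierarchy.eventually (locally l)); auto.
    pose proof (@filterlim_norm C_AbsRing C_NormedModule l).
    rewrite (Cnorm_Cmod l). change (Rbar_locally (Finite (Cmod l))) with (locally (Cmod l)).
    eapply filterlim_ext. 2: exact H. intros x; simpl. rewrite Cnorm_Cmod. reflexivity. }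
  assert (H2 : is_lim_seq (sum_n c) (Series c)).
  { apply Series_correct in Hc. exact Hc. }
  assert (Rbar_le (Cnorm l) (Series c)).
  { eapply is_lim_seq_le; eauto. intros n. eapply Rle_trans. apply norm_sum_n_le.
    rewrite !sum_n_Reals. apply sum_Rle. intros; auto. }
  exact H.
Qed.

Lemma Ccv_of_isC a l : isC a l -> Ccv (fun N => Csum a N) l.
Proof.
  intros H eps Heps. unfold isC, is_series in H.
  pose proof (proj1 (@filterlim_locally_ball_norm C_AbsRing nat C_NormedModule _ (@filter_filter _ _ eventually_filter) (@sum_n C_AbelianMonoid a) l) H) as H'.
  destruct (H' (mkposreal eps Heps)) as [N HN]. exists (S N). intros n Hn.
  destruct n. lia. rewrite Csum_sum_n. specialize (HN n ltac:(lia)). unfold ball_norm in HN.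
  rewrite Cnorm_Cmod. exact HN.
Qed.

Lemma Ccv_scal s l c : Ccv s l -> Ccv (fun N => Cmul c (s N)) (Cmul c l).
Proof.
  intros H eps Heps. destruct (H (eps / (Cnorm c + 1))) as [N HN].
  { apply Rdiv_lt_0_compat; auto. pose proof (Cnorm_ge0 c); lra. }
  exists N. intros n Hn. specialize (HN n Hn).
  replace (Csub (Cmul c (s n)) (Cmul c l)) with (Cmul c (Csub (s n) l)) by (generalize (s n); intros; cring).
  rewrite Cnorm_mul. pose proof (Cnorm_ge0 c). pose proof (Cnorm_ge0 (Csub (s n) l)).
  apply Rmult_lt_compat_l with (r := Cnorm c + 1) in HN; [|lra].
  field_simplify in HN; [|lra]. nra.
Qed.

Lemma isC_plus a b la lb : isC a la -> isC b lb -> isC (fun n => Cadd (a n) (b n)) (Cadd la lb).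
Proof. intros. apply (@is_series_plus C_AbsRing C_NormedModule); auto. Qed.

Lemma isC_scal c a l : isC a l -> isC (fun n => Cmul c (a n)) (Cmul c l).
Proof. intros. apply (@is_series_scal C_AbsRing C_NormedModule); auto. Qed.

Lemma isC_ext a b l : (forall n, a n = b n) -> isC a l -> isC b l.
Proof. intros. eapply (@is_series_ext C_AbsRing C_NormedModule); eauto. Qed.

Lemma isC_zero : isC (fun _ => C0) C0.
Proof. unfold isC, is_series.
  assert (forall n, @sum_n C_AbelianMonoid (fun _ => C0) n = C0).
  { induction n. rewrite sum_O. reflexivity. rewrite sum_Sn, IHn. change (plus C0 C0) with (Cadd C0 C0). cring. }
  eapply filterlim_ext. intros n; symmetry; apply H. apply filterlim_const. Qed.

Lemma isC_tail a L j : isC a L -> isC (fun k => a (S j + k)%nat) (Csub L (@sum_n C_AbelianMonoid a j)).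
Proof.
  intros H. apply (@is_series_incr_n C_AbsRing C_NormedModule a (S j)). lia.
  simpl pred. match goal with |- is_series _ ?x => replace x with L end. exact H.
  change (L = Cadd (Csub L (@sum_n C_AbelianMonoid a j)) (@sum_n C_AbelianMonoid a j)).
  generalize (@sum_n C_AbelianMonoid a j); intros; cring.
Qed.

Lemma ex_geom_half : ex_series (fun n => (1/2)^n).
Proof. apply ex_series_geom. rewrite Rabs_pos_eq; lra. Qed.

Lemma Series_geom_tail j : Series (fun k => (1/2)^(S j + k)) = (1/2)^j.
Proof.
  apply is_series_unique.
  replace ((1/2)^j) with ((1/2)^(S j) * / (1 - 1/2)) by (simpl; field).
  apply (is_series_ext (fun n => scal ((1/2)^(S j)) ((1/2)^n))). intros n. rewrite pow_add. reflexivity.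
  apply (@is_series_scal_l R_AbsRing R_NormedModule). apply is_series_geom. rewrite Rabs_pos_eq; lra.
Qed.

Lemma ex_geom_tail j : ex_series (fun k => (1/2)^(S j + k)).
Proof. apply (ex_series_ext (fun n => scal ((1/2)^(S j)) ((1/2)^n))). intros n. rewrite pow_add. reflexivity.
  apply (@ex_series_scal_l R_AbsRing R_NormedModule). apply ex_geom_half. Qed.

Lemma sum_le_Series (a : nat -> R) n : (forall k, 0 <= a k) -> ex_series a -> sum_n a n <= Series a.
Proof. intros Ha He. apply Series_correct in He.
  apply (is_lim_seq_incr_compare (sum_n a) (Series a) He). intros m. rewrite sum_Sn.
  simpl. unfold plus; simpl. pose proof (Ha (S m)). lra. Qed.

Lemma Series_ge0 (a : nat -> R) : (forall k, 0 <= a k) -> ex_series a -> 0 <= Series a.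
Proof. intros Ha He. eapply Rle_trans. 2: apply (sum_le_Series a 0); auto. rewrite sum_O. auto. Qed.

Definition Fterm (Q : nat -> nat) (b : nat -> CC) (z : CC) (n : nat) : CC :=
  Cmul (b n) (Cpow z (S (Q n))).
Definition Fs Q b z := CSer (Fterm Q b z).
Definition Dterm (Q : nat -> nat) (b : nat -> CC) (z : CC) (n : nat) : CC :=
  Cmul (Cmul (b n) (INR (S (Q n)), 0)) (Cpow z (Q n)).
Definition Fd Q b z := CSer (Dterm Q b z).
Definition mjt (Q : nat -> nat) (b : nat -> CC) (r : R) (n : nat) : R :=
  Cnorm (b n) * (INR (Q n) + 1)^2 * r^(Q n).
Definition MJ Q b r := ex_series (mjt Q b r).

Lemma mjt_ge0 Q b r n : 0 <= r -> 0 <= mjt Q b r n.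
Proof. intros. unfold mjt. pose proof (Cnorm_ge0 (b n)). pose proof (pow_le r (Q n) H).
  pose proof (pos_INR (Q n)). apply Rmult_le_pos; auto. apply Rmult_le_pos; auto. apply pow_le; lra. Qed.

Lemma Cnorm_real x : Cnorm (x, 0) = Rabs x.
Proof. unfold Cnorm; simpl. rewrite Rmult_0_r, Rplus_0_r. apply sqrt_Rsqr_abs. Qed.

Lemma Fterm_bound Q b r z n : 0 <= r -> Cnorm z <= r ->
  Cnorm (Fterm Q b z n) <= r * mjt Q b r n.
Proof.
  intros Hr Hz. unfold Fterm, mjt. rewrite Cnorm_mul, Cnorm_pow.
  pose proof (Cnorm_ge0 (b n)). pose proof (Cnorm_ge0 z). pose proof (pos_INR (Q n)).
  pose proof (pow_incr (Cnorm z) r (S (Q n)) (conj H0 Hz)).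
  assert (1 <= (INR (Q n) + 1)^2) by nra.
  pose proof (pow_le r (Q n) Hr).
  replace (r * (Cnorm (b n) * (INR (Q n) + 1) ^ 2 * r ^ Q n)) with
    ((Cnorm (b n) * r ^ (S (Q n))) * (INR (Q n) + 1) ^ 2) by (simpl; ring).
  assert (0 <= Cnorm (b n) * r ^ (S (Q n))) by (apply Rmult_le_pos; auto; apply pow_le; auto).
  apply Rle_trans with (Cnorm (b n) * r ^ (S (Q n))). apply Rmult_le_compat_l; auto.
  rewrite <- (Rmult_1_r (Cnorm (b n) * r ^ (S (Q n)))) at 1. apply Rmult_le_compat_l; auto.
Qed.

Lemma Dterm_bound Q b r z n : 0 <= r -> Cnorm z <= r ->
  Cnorm (Dterm Q b z n) <= mjt Q b r n.
Proof.
  intros Hr Hz. unfold Dterm, mjt. rewrite !Cnorm_mul, Cnorm_pow, Cnorm_real, S_INR.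
  pose proof (Cnorm_ge0 (b n)). pose proof (Cnorm_ge0 z). pose proof (pos_INR (Q n)).
  rewrite Rabs_pos_eq by lra.
  pose proof (pow_incr (Cnorm z) r (Q n) (conj H0 Hz)).
  pose proof (pow_le (Cnorm z) (Q n) H0).
  assert (0 <= Cnorm (b n) * (INR (Q n) + 1)) by nra.
  assert (Cnorm (b n) * (INR (Q n) + 1) * Cnorm z ^ Q n <= Cnorm (b n) * (INR (Q n) + 1) * r ^ Q n) by
    (apply Rmult_le_compat_l; auto).
  assert (0 <= Cnorm (b n) * (INR (Q n) + 1) * r ^ Q n) by (pose proof (pow_le r (Q n) Hr); nra).
  simpl. nra.
Qed.

Lemma Fs_spec Q b r z : 0 <= r -> Cnorm z <= r -> MJ Q b r -> isC (Fterm Q b z) (Fs Q b z).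
Proof. intros Hr Hz HM. apply CSer_spec.
  apply (@ex_series_le R_AbsRing R_CompleteNormedModule _ (fun n => r * mjt Q b r n)).
  intros n. change (norm ?x) with (Rabs x). rewrite Rabs_pos_eq by apply Cnorm_ge0.
  apply Fterm_bound; auto. apply (@ex_series_scal_l R_AbsRing R_NormedModule r). exact HM. Qed.

Lemma Fs_norm Q b r z : 0 <= r -> Cnorm z <= r -> MJ Q b r -> Cnorm (Fs Q b z) <= r * Series (mjt Q b r).
Proof. intros Hr Hz HM. rewrite <- Series_scal_l. eapply isC_norm_le. apply Fs_spec with r; auto.
  apply (@ex_series_scal_l R_AbsRing R_NormedModule r). exact HM.
  intros; apply Fterm_bound; auto. Qed.

Lemma Fd_spec Q b r z : 0 <= r -> Cnorm z <= r -> MJ Q b r -> isC (Dterm Q b z) (Fd Q b z).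
Proof. intros Hr Hz HM. apply CSer_spec.
  apply (@ex_series_le R_AbsRing R_CompleteNormedModule _ (fun n => mjt Q b r n)).
  intros n. change (norm ?x) with (Rabs x). rewrite Rabs_pos_eq by apply Cnorm_ge0.
  apply Dterm_bound; auto. exact HM. Qed.

Definition Erem (z k : CC) (j : nat) : CC :=
  Csub (Csub (Cpow (Cadd z k) (S j)) (Cpow z (S j))) (Cmul (INR (S j), 0) (Cmul (Cpow z j) k)).

Lemma Erem_bound z k r j : Cnorm z <= r -> Cnorm (Cadd z k) <= r ->
  Cnorm (Erem z k j) <= INR j * INR j * r ^ (pred j) * (Cnorm k * Cnorm k).
Proof.
  intros Hz Hzk. pose proof (Cnorm_ge0 z). pose proof (Cnorm_ge0 k).
  assert (Hr : 0 <= r) by lra.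
  destruct j.
  { unfold Erem. simpl. replace (Csub (Csub (Cmul (Cadd z k) C1) (Cmul z C1)) (Cmul (1, 0) (Cmul C1 k))) with C0 by cring.
    rewrite Cnorm_C0. lra. }
  induction j.
  { unfold Erem. simpl. replace (Csub (Csub (Cmul (Cadd z k) (Cmul (Cadd z k) C1)) (Cmul z (Cmul z C1)))
       (Cmul (1 + 1, 0) (Cmul (Cmul z C1) k))) with (Cmul k k) by cring.
    rewrite Cnorm_mul. lra. }
  assert (E : Erem z k (S (S j)) = Cadd (Cmul (Cadd z k) (Erem z k (S j))) (Cmul (INR (S (S j)), 0) (Cmul (Cpow z (S j)) (Cmul k k)))).
  { unfold Erem. change (Cpow (Cadd z k) (S (S (S j)))) with (Cmul (Cadd z k) (Cpow (Cadd z k) (S (S j)))).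
    change (Cpow z (S (S (S j)))) with (Cmul z (Cpow z (S (S j)))).
    change (Cpow z (S (S j))) with (Cmul z (Cpow z (S j))).
    rewrite !S_INR. generalize (Cpow (Cadd z k) (S (S j))) (Cpow z (S j)). intros. cring. }
  rewrite E. eapply Rle_trans. apply Cnorm_add.
  rewrite !Cnorm_mul, Cnorm_real, Cnorm_pow, Rabs_pos_eq by apply pos_INR.
  simpl pred in *. rewrite !S_INR in *. pose proof (pos_INR j).
  pose proof (pow_incr (Cnorm z) r (S j) (conj H Hz)). pose proof (pow_le (Cnorm z) (S j) H).
  pose proof (pow_le r j Hr).
  pose proof (Cnorm_ge0 (Cadd z k)).
  assert (A1 : Cnorm (Cadd z k) * Cnorm (Erem z k (S j)) <= r * ((INR j + 1) * (INR j + 1) * r ^ j * (Cnorm k * Cnorm k))).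
  { apply Rmult_le_compat; auto. apply Cnorm_ge0. }
  assert (A2 : (INR j + 1 + 1) * (Cnorm z ^ (S j) * (Cnorm k * Cnorm k)) <= (INR j + 1 + 1) * (r ^ (S j) * (Cnorm k * Cnorm k))).
  { apply Rmult_le_compat_l. lra. apply Rmult_le_compat_r. nra. exact H2. }
  simpl pow in *.
  assert (0 <= r * r^j * (Cnorm k * Cnorm k)) by (apply Rmult_le_pos; nra).
  nra.
Qed.

Definition Tm (Q : nat -> nat) (al : CC) (b : nat -> CC) (p : C2) : C2 :=
  (Cmul al (Cadd (fst p) (Fs Q b (snd p))), Cmul al (snd p)).
Definition Lmat (al d : CC) : Mat2 := ((al, Cmul al d), (C0, al)).

Lemma Ediff_bound Q b r z k : 0 < r -> Cnorm z <= r -> Cnorm (Cadd z k) <= r -> MJ Q b r ->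
  Cnorm (Csub (Csub (Fs Q b (Cadd z k)) (Fs Q b z)) (Cmul (Fd Q b z) k))
    <= Series (mjt Q b r) * ((Cnorm k * Cnorm k) / r).
Proof.
  intros Hr Hz Hzk HM.
  pose proof (Fs_spec Q b r (Cadd z k) ltac:(lra) Hzk HM) as H1.
  pose proof (Fs_spec Q b r z ltac:(lra) Hz HM) as H0.
  pose proof (Fd_spec Q b r z ltac:(lra) Hz HM) as HD.
  pose proof (isC_plus _ _ _ _ (isC_plus _ _ _ _ H1 (isC_scal (-1,0) _ _ H0)) (isC_scal (-1,0) _ _ (isC_scal k _ _ HD))) as HH.
  replace (Csub (Csub (Fs Q b (Cadd z k)) (Fs Q b z)) (Cmul (Fd Q b z) k)) with
    (Cadd (Cadd (Fs Q b (Cadd z k)) (Cmul (-1, 0) (Fs Q b z))) (Cmul (-1, 0) (Cmul k (Fd Q b z)))) by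
    (generalize (Fs Q b (Cadd z k)) (Fs Q b z) (Fd Q b z); intros; cring).
  rewrite <- Series_scal_r. eapply isC_norm_le. exact HH.
  apply ex_series_scal_r. exact HM.
  intros n. cbv beta.
  replace (Cadd (Cadd (Fterm Q b (Cadd z k) n) (Cmul (-1, 0) (Fterm Q b z n)))
      (Cmul (-1, 0) (Cmul k (Dterm Q b z n)))) with (Cmul (b n) (Erem z k (Q n))).
  2:{ unfold Fterm, Dterm, Erem. generalize (b n) (INR (S (Q n))) (Cpow (Cadd z k) (S (Q n))) (Cpow z (S (Q n))) (Cpow z (Q n)). intros. cring. }
  rewrite Cnorm_mul. pose proof (Erem_bound z k r (Q n) Hz Hzk).
  unfold mjt. pose proof (Cnorm_ge0 (b n)). pose proof (Cnorm_ge0 k).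
  pose proof (pos_INR (Q n)).
  eapply Rle_trans. apply Rmult_le_compat_l. auto. exact H.
  assert (0 <= Cnorm k * Cnorm k) by nra.
  destruct (Q n) as [|m] eqn:EQ.
  - simpl. assert (0 <= Cnorm (b n) * (0 + 1) ^ 2 * 1 * (Cnorm k * Cnorm k / r)).
    { apply Rmult_le_pos. nra. apply Rmult_le_pos; auto. left; apply Rinv_0_lt_compat; auto. }
    nra.
  - simpl pred. rewrite S_INR.
    pose proof (pos_INR m). pose proof (pow_le r m ltac:(lra)).
    replace (Cnorm (b n) * (INR m + 1 + 1) ^ 2 * r ^ S m * (Cnorm k * Cnorm k / r)) with
      (Cnorm (b n) * (INR m + 1 + 1) ^ 2 * r ^ m * (Cnorm k * Cnorm k)) by (simpl; field; lra).
    assert (0 <= Cnorm (b n) * r ^ m * (Cnorm k * Cnorm k)) by (apply Rmult_le_pos; auto; apply Rmult_le_pos; auto).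
    nra.
Qed.

Lemma Tm_deriv Q al b r w z : Cnorm z < r -> MJ Q b r ->
  has_cderiv (Tm Q al b) (w, z) (Lmat al (Fd Q b z)).
Proof.
  intros Hz HM eps Heps.
  pose proof (Cnorm_ge0 z). assert (Hr : 0 < r) by lra.
  set (K := Series (mjt Q b r)).
  assert (HK : 0 <= K). { unfold K. apply Series_ge0. intros; apply mjt_ge0; lra. exact HM. }
  pose proof (Cnorm_ge0 al).
  set (d := Rmin (r - Cnorm z) (eps * r / ((Cnorm al + 1) * (K + 1)))).
  assert (Hd2 : 0 < eps * r / ((Cnorm al + 1) * (K + 1))).
  { apply Rdiv_lt_0_compat. nra. nra. }
  exists d. split. unfold d. apply Rmin_glb_lt; lra.
  intros [h1 k] [Hh0 Hhd].
  assert (Hk : Cnorm k <= C2norm (h1, k)) by apply (C2norm_ge_snd (h1, k)).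
  assert (Hkd : Cnorm k < d) by lra.
  assert (Hzk : Cnorm (Cadd z k) <= r).
  { eapply Rle_trans. apply Cnorm_add. assert (d <= r - Cnorm z) by apply Rmin_l. lra. }
  pose proof (Ediff_bound Q b r z k Hr ltac:(lra) Hzk HM) as HE.
  fold K in HE.
  set (Ed := Csub (Csub (Fs Q b (Cadd z k)) (Fs Q b z)) (Cmul (Fd Q b z) k)) in HE.
  replace (C2sub (C2sub (Tm Q al b (C2add (w, z) (h1, k))) (Tm Q al b (w, z)))
         (Mat2_apply (Lmat al (Fd Q b z)) (h1, k))) with (Cmul al Ed, C0).
  2:{ unfold Tm, C2sub, C2add, Mat2_apply, Lmat, Ed; simpl. f_equal.
      generalize (Fs Q b (Cadd z k)) (Fs Q b z) (Fd Q b z); intros; cring. cring. }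
  rewrite C2norm_fst0 by apply Cnorm_C0. rewrite Cnorm_mul.
  pose proof (Cnorm_ge0 k).
  assert (d <= eps * r / ((Cnorm al + 1) * (K + 1))) by apply Rmin_r.
  set (hn := C2norm (h1, k)) in *.
  assert (Cnorm Ed <= K * Cnorm k / r * hn).
  { eapply Rle_trans. exact HE.
    replace (K * (Cnorm k * Cnorm k / r)) with ((K / r * Cnorm k) * Cnorm k) by (field; lra).
    replace (K * Cnorm k / r * hn) with ((K / r * Cnorm k) * hn) by (field; lra).
    apply Rmult_le_compat_l; auto. apply Rmult_le_pos; auto. apply Rdiv_le_0_compat; lra. }
  assert (K * Cnorm k / r <= K * (eps / ((Cnorm al + 1) * (K + 1)))).
  { unfold Rdiv. rewrite Rmult_assoc. apply Rmult_le_compat_l; auto.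
    apply Rmult_le_reg_r with r; auto. rewrite Rmult_assoc, Rinv_l, Rmult_1_r by lra.
    replace (eps * / ((Cnorm al + 1) * (K + 1)) * r) with (eps * r / ((Cnorm al + 1) * (K + 1))) by (unfold Rdiv; ring).
    lra. }
  assert (Cnorm al * (K * (eps / ((Cnorm al + 1) * (K + 1)))) <= eps).
  { replace (Cnorm al * (K * (eps / ((Cnorm al + 1) * (K + 1))))) with
      (eps * ((Cnorm al / (Cnorm al + 1)) * (K / (K+1)))) by (field; lra).
    assert (Cnorm al / (Cnorm al + 1) <= 1). { apply Rmult_le_reg_r with (Cnorm al + 1). lra. unfold Rdiv. rewrite Rmult_assoc, Rinv_l by lra. lra. }
    assert (K / (K + 1) <= 1). { apply Rmult_le_reg_r with (K + 1). lra. unfold Rdiv. rewrite Rmult_assoc, Rinv_l by lra. lra. }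
    assert (0 <= Cnorm al / (Cnorm al + 1)) by (apply Rdiv_le_0_compat; lra).
    assert (0 <= K / (K + 1)) by (apply Rdiv_le_0_compat; lra).
    assert (Cnorm al / (Cnorm al + 1) * (K / (K + 1)) <= 1) by nra.
    assert (0 <= eps * (1 - Cnorm al / (Cnorm al + 1) * (K / (K + 1)))) by (apply Rmult_le_pos; lra).
    lra. }
  assert (0 <= hn) by (unfold hn; apply C2norm_ge0).
  assert (0 <= K * Cnorm k / r) by (apply Rdiv_le_0_compat; nra).
  apply Rle_trans with (Cnorm al * (K * Cnorm k / r * hn)). apply Rmult_le_compat_l; auto.
  replace (Cnorm al * (K * Cnorm k / r * hn)) with ((Cnorm al * (K * Cnorm k / r)) * hn) by ring.
  apply Rmult_le_compat_r; auto.
  eapply Rle_trans. apply Rmult_le_compat_l; eauto. auto.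
Qed.

Lemma Mat2_norm_ge (al d : CC) : Cnorm (Cmul al d) <= Mat2_norm (Lmat al d).
Proof. unfold Mat2_norm, Lmat; simpl. rewrite <- (sqrt_Rsqr (Cnorm (Cmul al d))) at 1 by apply Cnorm_ge0.
  apply sqrt_le_1_alt. unfold Rsqr. pose proof (Cnorm_ge0 al). pose proof (Cnorm_ge0 C0). nra. Qed.

Fixpoint cf_ppair (theta : R) (n : nat) : (Z * Z)%type :=
  match n with
  | O => (cf_a theta 0, 1%Z)
  | S m => let '(p, p') := cf_ppair theta m in ((cf_a theta (S m) * p + p')%Z, p)
  end.

Definition cp th n := fst (cf_ppair th n).
Definition cpp th n := snd (cf_ppair th n).
Definition cqq th n := snd (cf_qpair th n).

Lemma cq_S th k : cf_q th (S k) = (cf_a th (S k) * cf_q th k + cqq th k)%Z.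
Proof. unfold cf_q, cqq; simpl. destruct (cf_qpair th k); reflexivity. Qed.
Lemma cqq_S th k : cqq th (S k) = cf_q th k.
Proof. unfold cf_q, cqq; simpl. destruct (cf_qpair th k); reflexivity. Qed.
Lemma cp_S th k : cp th (S k) = (cf_a th (S k) * cp th k + cpp th k)%Z.
Proof. unfold cp, cpp; simpl. destruct (cf_ppair th k); reflexivity. Qed.
Lemma cpp_S th k : cpp th (S k) = cp th k.
Proof. unfold cp, cpp; simpl. destruct (cf_ppair th k); reflexivity. Qed.

Lemma floor_prop r : IZR (floorZ r) <= r < IZR (floorZ r) + 1.
Proof. unfold floorZ. pose proof (base_Int_part r). lra. Qed.

Lemma rem_bounds th k : 0 <= cf_rem th k < 1.
Proof. destruct k; simpl; [pose proof (floor_prop th) | pose proof (floor_prop (/ cf_rem th k))]; lra. Qed.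

Definition dd th k := IZR (cf_q th k) * th - IZR (cp th k).
Definition ddp th k := IZR (cqq th k) * th - IZR (cpp th k).

Definition Inv th k :=
  (1 <= cf_q th k)%Z /\ (0 <= cqq th k)%Z /\ (cqq th k <= cf_q th k)%Z /\
  (Z.of_nat k <= cf_q th k)%Z /\ ((1 <= k)%nat -> (1 <= cqq th k)%Z) /\
  dd th k = - cf_rem th k * ddp th k /\
  (IZR (cf_q th k) * ddp th k - IZR (cqq th k) * dd th k)^2 = 1.

Lemma rem_nz th k : irrational th -> Inv th k -> cf_rem th k <> 0.
Proof.
  intros Hi [H1 [_ [_ [_ [_ [Hd _]]]]]] H0. rewrite H0 in Hd. unfold dd in Hd.
  apply (Hi (cp th k) (cf_q th k)). lia.
  assert (IZR (cf_q th k) <> 0) by (apply not_0_IZR; lia).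
  field_simplify_eq; auto. lra.
Qed.

Lemma Inv_all th : irrational th -> forall k, Inv th k.
Proof.
  intros Hi. induction k.
  - unfold Inv, dd, ddp, cf_q, cqq, cp, cpp; simpl. repeat split; try lia.
    pose proof (rem_bounds th 0). simpl in H. ring.
    ring.
  - pose proof (rem_nz th k Hi IHk) as Hnz. pose proof (rem_bounds th k) as Hb.
    destruct IHk as [H1 [H2 [H3 [H4 [H5 [H6 H7]]]]]].
    assert (Ha : (1 <= cf_a th (S k))%Z).
    { simpl. pose proof (floor_prop (/ cf_rem th k)).
      assert (1 < / cf_rem th k). { rewrite <- Rinv_1. apply Rinv_lt_contravar; lra. }
      assert (Hp : 0 < IZR (floorZ (/ cf_rem th k))) by lra. apply lt_0_IZR in Hp. lia. }
    unfold Inv. rewrite cq_S, cqq_S. repeat split; try lia.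
    + nia.
    + rewrite Nat2Z.inj_succ. destruct k. nia. specialize (H5 ltac:(lia)). nia.
    + unfold dd, ddp. rewrite cq_S, cqq_S, cp_S, cpp_S.
      assert (E : cf_rem th (S k) = / cf_rem th k - IZR (cf_a th (S k))) by reflexivity.
      rewrite E. rewrite plus_IZR, !mult_IZR, plus_IZR, mult_IZR.
      assert (HH : IZR (cqq th k) * th - IZR (cpp th k) = - (IZR (cf_q th k) * th - IZR (cp th k)) / cf_rem th k).
      { unfold dd, ddp in H6. rewrite H6. field; auto. }
      replace ((IZR (cf_a th (S k)) * IZR (cf_q th k) + IZR (cqq th k)) * th -
        (IZR (cf_a th (S k)) * IZR (cp th k) + IZR (cpp th k))) with
        (IZR (cf_a th (S k)) * (IZR (cf_q th k) * th - IZR (cp th k)) + (IZR (cqq th k) * th - IZR (cpp th k))) by ring.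
      rewrite HH. field. auto.
    + unfold dd, ddp in *. rewrite cqq_S, cp_S, cpp_S, cq_S. rewrite !plus_IZR, !mult_IZR.
      etransitivity; [|exact H7]. ring.
Qed.

Lemma q_pos th k : irrational th -> (1 <= cf_q th k)%Z.
Proof. intros Hi. apply (Inv_all th Hi k). Qed.

Lemma q_ge_k th k : irrational th -> (Z.of_nat k <= cf_q th k)%Z.
Proof. intros Hi. apply (Inv_all th Hi k). Qed.

Lemma q_step th k : irrational th -> (cf_q th k <= cf_q th (S k))%Z.
Proof. intros Hi. pose proof (Inv_all th Hi (S k)) as [_ [_ [H _]]]. rewrite cqq_S in H. auto. Qed.

Lemma q_mono th j j' : irrational th -> (j <= j')%nat -> (cf_q th j <= cf_q th j')%Z.
Proof. intros Hi H. induction H. lia. pose proof (q_step th m Hi). lia. Qed.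

Lemma dd_bounds th k : irrational th ->
  dd th k <> 0 /\ Rabs (dd th k) <= / IZR (cf_q th (S k)) /\ / (2 * IZR (cf_q th (S k))) <= Rabs (dd th k).
Proof.
  intros Hi. pose proof (Inv_all th Hi (S k)) as [H1 [H2 [H3 [H4 [H5 [H6 H7]]]]]].
  unfold ddp in H6, H7. rewrite cqq_S, cpp_S in H6, H7. fold (dd th k) in H6, H7.
  rewrite H6 in H7.
  pose proof (rem_bounds th (S k)) as Hb.
  pose proof (q_step th k Hi). pose proof (q_pos th k Hi).
  apply IZR_le in H. apply IZR_le in H0. apply IZR_le in H1.
  set (x := cf_rem th (S k)) in *. set (Q1 := IZR (cf_q th (S k))) in *. set (Q0 := IZR (cf_q th k)) in *.
  set (d := dd th k) in *.
  assert (E : (d * (Q1 + Q0 * x))^2 = 1) by (rewrite <- H7; ring).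
  assert (HM : 0 < Q1 + Q0 * x) by nra.
  assert (E2 : Rabs d * (Q1 + Q0 * x) = 1).
  { rewrite <- (Rabs_pos_eq (Q1 + Q0 * x)) by lra. rewrite <- Rabs_mult.
    assert (Rabs (d * (Q1 + Q0*x)) ^2 = 1) by (rewrite RPow_abs, E; apply Rabs_R1).
    pose proof (Rabs_pos (d * (Q1 + Q0 * x))). nra. }
  pose proof (Rabs_pos d).
  split. intros Hd. rewrite Hd, Rabs_R0 in E2. lra.
  split.
  - apply Rmult_le_reg_r with Q1. lra. rewrite Rinv_l by lra. nra.
  - apply Rmult_le_reg_r with (2 * Q1). lra. rewrite Rinv_l by lra. nra.
Qed.

Definition cvseq th n := ln (IZR (cf_q th (S n))) / IZR (cf_q th n).

Definition Ncv th (M : R) : nat :=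
  epsilon (inhabits 0%nat) (fun N => forall n, (N <= n)%nat -> M < cvseq th n).

Lemma Ncv_spec th M n : cv_infty (cvseq th) -> (Ncv th M <= n)%nat -> M < cvseq th n.
Proof. intros H Hn. unfold Ncv in Hn.
  pose proof (epsilon_spec (inhabits 0%nat) (fun N => forall n, (N <= n)%nat -> M < cvseq th n) (H M)).
  simpl in H0. apply H0; auto. Qed.

Definition thr (n : nat) := ln (4 * (INR n + 1)).
Definition Gf (n Qp : nat) : nat := (Qp + 1 + (n+2)^3 * (Qp+1))%nat.

Fixpoint kseq th n : nat :=
  match n with
  | O => Nat.max 1 (Ncv th (thr 0))
  | S m => Nat.max (S (kseq th m)) (Nat.max (Ncv th (thr (S m))) (Gf m (Z.to_nat (cf_q th (kseq th m)))))
  end.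

Definition Qs th n := Z.to_nat (cf_q th (kseq th n)).
Definition ds th n := dd th (kseq th n).

Section Sel.
Variable th : R.
Hypothesis Hi : irrational th.
Hypothesis Hcv : cv_infty (cvseq th).

Lemma kseq_incr n : (kseq th n < kseq th (S n))%nat.
Proof. change (kseq th (S n)) with (Nat.max (S (kseq th n)) (Nat.max (Ncv th (thr (S n))) (Gf n (Z.to_nat (cf_q th (kseq th n)))))). lia. Qed.

Lemma kseq_ge n : (n + 1 <= kseq th n)%nat.
Proof. induction n. change (kseq th 0) with (Nat.max 1 (Ncv th (thr 0))); lia. pose proof (kseq_incr n). lia. Qed.

Lemma kseq_Ncv n : (Ncv th (thr n) <= kseq th n)%nat.
Proof. destruct n. change (kseq th 0) with (Nat.max 1 (Ncv th (thr 0))); lia. change (kseq th (S n)) with (Nat.max (S (kseq th n)) (Nat.max (Ncv th (thr (S n))) (Gf n (Z.to_nat (cf_q th (kseq th n)))))). lia. Qed.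

Lemma INR_Qs n : INR (Qs th n) = IZR (cf_q th (kseq th n)).
Proof. unfold Qs. rewrite INR_IZR_INZ, Z2Nat.id. reflexivity. pose proof (q_pos th (kseq th n) Hi). lia. Qed.

Lemma Qs_ge_k n : (kseq th n <= Qs th n)%nat.
Proof. unfold Qs. pose proof (q_ge_k th (kseq th n) Hi). lia. Qed.

Lemma Qs_ge n : (n + 1 <= Qs th n)%nat.
Proof. pose proof (Qs_ge_k n). pose proof (kseq_ge n). lia. Qed.

Lemma Qs_gap n : (Gf n (Qs th n) <= Qs th (S n))%nat.
Proof. pose proof (Qs_ge_k (S n)). change (kseq th (S n)) with (Nat.max (S (kseq th n)) (Nat.max (Ncv th (thr (S n))) (Gf n (Z.to_nat (cf_q th (kseq th n)))))) in H. unfold Qs at 1. lia. Qed.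

Lemma ds_int n : INR (Qs th n) * th = IZR (cp th (kseq th n)) + ds th n.
Proof. rewrite INR_Qs. unfold ds, dd. ring. Qed.

Lemma ds_nz n : ds th n <> 0.
Proof. apply (dd_bounds th (kseq th n) Hi). Qed.

Lemma ds_upper n : Rabs (ds th n) <= (/ (4 * (INR n + 1))) ^ (Qs th n).
Proof.
  pose proof (dd_bounds th (kseq th n) Hi) as [_ [H1 _]]. fold (ds th n) in H1.
  pose proof (Ncv_spec th (thr n) (kseq th n) Hcv (kseq_Ncv n)) as H. unfold cvseq, thr in H.
  set (k := kseq th n) in *.
  pose proof (q_pos th k Hi) as Hq. pose proof (q_pos th (S k) Hi) as Hq1.
  apply IZR_le in Hq. apply IZR_le in Hq1.
  pose proof (pos_INR n).
  assert (H4 : 0 < 4 * (INR n + 1)) by lra.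
  assert (ln (4 * (INR n + 1)) * IZR (cf_q th k) < ln (IZR (cf_q th (S k)))).
  { apply Rmult_lt_compat_r with (r := IZR (cf_q th k)) in H; [|lra].
    unfold Rdiv in H. rewrite Rmult_assoc, Rinv_l, Rmult_1_r in H by lra. exact H. }
  replace (IZR (cf_q th k)) with (INR (Qs th n)) in H2 by (unfold k; apply INR_Qs). rewrite Rmult_comm, <- ln_pow in H2 by lra.
  apply ln_lt_inv in H2; [| apply pow_lt; lra | lra].
  rewrite pow_inv. eapply Rle_trans. exact H1. left. apply Rinv_lt_contravar; auto.
  apply Rmult_lt_0_compat; [apply pow_lt; lra | lra].
Qed.

Lemma ds_lower n : / (2 * INR (Qs th (S n))) <= Rabs (ds th n).
Proof.
  pose proof (dd_bounds th (kseq th n) Hi) as [_ [_ H1]]. fold (ds th n) in H1.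
  eapply Rle_trans; [|exact H1].
  pose proof (q_pos th (S (kseq th n)) Hi) as Hq. apply IZR_le in Hq.
  pose proof (q_mono th (S (kseq th n)) (kseq th (S n)) Hi (kseq_incr n)) as Hm. apply IZR_le in Hm.
  rewrite INR_Qs. apply Rinv_le_contravar; lra.
Qed.

End Sel.

Lemma Fs_ext Q b b' z z' : (forall n, Fterm Q b z n = Fterm Q b' z' n) -> Fs Q b z = Fs Q b' z'.
Proof. intros H. unfold Fs. f_equal. apply functional_extensionality. auto. Qed.

Lemma Fs_comb Q b b1 b2 c1 c2 r z : 0 <= r -> Cnorm z <= r -> MJ Q b1 r -> MJ Q b2 r ->
  (forall n, b n = Cadd (Cmul c1 (b1 n)) (Cmul c2 (b2 n))) ->
  Fs Q b z = Cadd (Cmul c1 (Fs Q b1 z)) (Cmul c2 (Fs Q b2 z)).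
Proof.
  intros Hr Hz H1 H2 Hb. apply CSer_eq.
  eapply isC_ext. 2: apply (isC_plus _ _ _ _ (isC_scal c1 _ _ (Fs_spec Q b1 r z Hr Hz H1)) (isC_scal c2 _ _ (Fs_spec Q b2 r z Hr Hz H2))).
  intros n. cbv beta. unfold Fterm. rewrite Hb. generalize (b1 n) (b2 n) (Cpow z (S (Q n))). intros. cring.
Qed.

Lemma Fs_zero Q b z : (forall n, b n = C0) -> Fs Q b z = C0.
Proof. intros H. apply CSer_eq. eapply isC_ext. 2: apply isC_zero. intros n. unfold Fterm. rewrite H.
  generalize (Cpow z (S (Q n))). intros; cring. Qed.

Lemma MJ_mono Q b r r' : 0 <= r' <= r -> MJ Q b r -> MJ Q b r'.
Proof. intros Hr H. apply (@ex_series_le R_AbsRing R_CompleteNormedModule _ (mjt Q b r)); auto.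
  intros n. change (norm ?x) with (Rabs x). rewrite Rabs_pos_eq by (apply mjt_ge0; lra).
  unfold mjt. pose proof (Cnorm_ge0 (b n)). pose proof (pow_incr r' r (Q n) Hr).
  apply Rmult_le_compat_l; auto. apply Rmult_le_pos; auto. apply pow2_ge_0. Qed.

Lemma MJ_le Q b b' r : 0 <= r -> (forall n, Cnorm (b n) <= Cnorm (b' n)) -> MJ Q b' r -> MJ Q b r.
Proof. intros Hr Hb H. apply (@ex_series_le R_AbsRing R_CompleteNormedModule _ (mjt Q b' r)); auto.
  intros n. change (norm ?x) with (Rabs x). rewrite Rabs_pos_eq by (apply mjt_ge0; lra).
  unfold mjt. apply Rmult_le_compat_r. apply pow_le; auto. apply Rmult_le_compat_r. apply pow2_ge_0. auto. Qed.

Lemma pow_le1' x k : 0 <= x <= 1 -> x ^ k <= 1.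
Proof. intros H. induction k. simpl; lra. simpl. pose proof (pow_le x k ltac:(lra)). nra. Qed.

Lemma pow_ge1' x k : 1 <= x -> 1 <= x ^ k.
Proof. intros H. induction k. simpl; lra. simpl. nra. Qed.

Lemma pow_decr x n m : 0 <= x <= 1 -> (n <= m)%nat -> x ^ m <= x ^ n.
Proof. intros Hx H. replace m with (n + (m - n))%nat by lia. rewrite pow_add.
  pose proof (pow_le x n ltac:(lra)). assert (x ^ (m - n) <= 1) by (apply pow_le1'; lra).
  assert (0 <= x ^ (m-n)) by (apply pow_le; lra). nra. Qed.

Lemma pow_incr_exp x n m : 1 <= x -> (n <= m)%nat -> x ^ n <= x ^ m.
Proof. intros Hx H. replace m with (n + (m - n))%nat by lia. rewrite pow_add.
  pose proof (pow_le x n ltac:(lra)). assert (1 <= x ^ (m - n)) by (apply pow_ge1'; lra). nra. Qed.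

Lemma Bernoulli_ineq t m : 0 <= t -> 1 + INR m * t <= (1 + t) ^ m.
Proof. intros Ht. induction m. simpl. lra. rewrite S_INR. simpl.
  pose proof (pos_INR m). nra. Qed.

Lemma pow4 m : (INR m + 1) ^ 2 <= 4 ^ m.
Proof. induction m. simpl. lra. rewrite S_INR. simpl pow. simpl pow in IHm.
  pose proof (pos_INR m). assert (0 <= INR m * INR m) by nra. nra. Qed.

Lemma lin_geo rho : 0 < rho < 1 -> exists C, forall m, (INR m + 1) * rho ^ m <= C.
Proof.
  intros Hr. set (t := / rho - 1). assert (Ht : 0 < t).
  { unfold t. assert (1 < / rho). rewrite <- Rinv_1. apply Rinv_lt_contravar; lra. lra. }
  exists (1 + / t). intros m. pose proof (Bernoulli_ineq t m ltac:(lra)).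
  assert (E : (1 + t) ^ m * rho ^ m = 1).
  { rewrite <- Rpow_mult_distr. unfold t. replace ((1 + (/ rho - 1)) * rho) with 1 by (field; lra). apply pow1. }
  pose proof (pos_INR m). pose proof (pow_lt rho m ltac:(lra)).
  assert ((INR m + 1) <= (1 + INR m * t) * (1 + / t)).
  { replace ((1 + INR m * t) * (1 + / t)) with (1 + / t + INR m * t + INR m) by (field; lra).
    assert (0 < / t) by (apply Rinv_0_lt_compat; lra). nra. }
  assert ((INR m + 1) * rho ^ m <= (1 + t) ^ m * (1 + / t) * rho ^ m).
  { apply Rmult_le_compat_r. lra. eapply Rle_trans. exact H2. apply Rmult_le_compat_r.
    assert (0 < /t) by (apply Rinv_0_lt_compat; lra). lra. exact H. }
  replace ((1 + t) ^ m * (1 + / t) * rho ^ m) with ((1 + t) ^ m * rho ^ m * (1 + / t)) in H3 by ring.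
  rewrite E in H3. lra.
Qed.

Lemma Cnorm_Ce_pow t n : Cnorm (Cpow (Ce t) n) = 1.
Proof. rewrite Cnorm_pow, Ce_norm. apply pow1. Qed.

Section MJs.
Variable Q : nat -> nat.
Hypothesis HQ : forall n, (n + 1 <= Q n)%nat.

Lemma MJ_disk b K : (forall n, Cnorm (b n) <= K) -> forall r, 0 <= r < 1 -> MJ Q b r.
Proof.
  intros Hb r Hr.
  assert (HK : 0 <= K) by (pose proof (Hb 0%nat); pose proof (Cnorm_ge0 (b 0%nat)); lra).
  set (r' := Rmax r (1/2)). assert (Hr' : 1/2 <= r' < 1) by (unfold r'; split; [apply Rmax_r|apply Rmax_lub_lt; lra]).
  apply MJ_mono with r'. split. lra. apply Rmax_l.
  set (s := sqrt r'). set (rho := sqrt s).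
  assert (Hs : 0 < s < 1). { unfold s. split. apply sqrt_lt_R0; lra. rewrite <- sqrt_1. apply sqrt_lt_1_alt; lra. }
  assert (Hrho : 0 < rho < 1). { unfold rho. split. apply sqrt_lt_R0; lra. rewrite <- sqrt_1. apply sqrt_lt_1_alt; lra. }
  assert (Es : rho * rho = s) by (unfold rho; apply sqrt_sqrt; lra).
  assert (Er : s * s = r') by (unfold s; apply sqrt_sqrt; lra).
  destruct (lin_geo rho Hrho) as [C HC].
  apply (@ex_series_le R_AbsRing R_CompleteNormedModule _ (fun n => K * C^2 * s ^ n)).
  - intros n. change (norm ?x) with (Rabs x). rewrite Rabs_pos_eq by (apply mjt_ge0; lra).
    unfold mjt. pose proof (HC (Q n)). pose proof (pow_lt rho (Q n) ltac:(lra)).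
    pose proof (pos_INR (Q n)).
    assert (E1 : r' ^ Q n = (rho ^ Q n)^2 * s ^ Q n).
    { rewrite <- Er, <- Es. rewrite !Rpow_mult_distr. simpl. ring. }
    assert (E2 : (INR (Q n) + 1) ^ 2 * r' ^ Q n = ((INR (Q n) + 1) * rho ^ Q n)^2 * s ^ Q n).
    { rewrite E1. ring. }
    assert (0 <= (INR (Q n) + 1) * rho ^ Q n) by nra.
    assert (((INR (Q n) + 1) * rho ^ Q n)^2 <= C^2) by (apply pow_incr; lra).
    assert (s ^ Q n <= s ^ n). { apply pow_decr. lra. pose proof (HQ n). lia. }
    pose proof (pow_lt s (Q n) ltac:(lra)). pose proof (Cnorm_ge0 (b n)).
    rewrite Rmult_assoc, E2. replace (K * C^2 * s^n) with (K * (C^2 * s^n)) by ring.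
    apply Rmult_le_compat; auto. apply Rmult_le_pos. apply pow2_ge_0. lra.
    apply Rmult_le_compat; auto. apply pow2_ge_0. lra.
  - apply (@ex_series_scal_l R_AbsRing R_NormedModule (K * C^2)). apply ex_series_geom. rewrite Rabs_pos_eq; lra.
Qed.
End MJs.

Lemma Tm_holo_ent Q al b : (forall r, 0 <= r -> MJ Q b r) -> holomorphic_on (fun _ => True) (Tm Q al b).
Proof. intros H [w z] _. exists (Lmat al (Fd Q b z)). apply Tm_deriv with (Cnorm z + 1). lra.
  apply H. pose proof (Cnorm_ge0 z). lra. Qed.

Lemma Tm_holo_disk Q al b : (forall r, 0 <= r < 1 -> MJ Q b r) -> holomorphic_on CxDisk (Tm Q al b).
Proof. intros H [w z] Hp. unfold CxDisk in Hp; simpl in Hp. exists (Lmat al (Fd Q b z)).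
  apply Tm_deriv with ((Cnorm z + 1)/2). lra. apply H. pose proof (Cnorm_ge0 z). lra. Qed.

Lemma sum_bound (x : nat -> R) i Hh : (forall n, (n <= i)%nat -> x n <= Hh) -> sum_n x i <= INR (S i) * Hh.
Proof. intros H. induction i. rewrite sum_O. specialize (H 0%nat (le_n _)). change (INR 1) with 1. lra.
  rewrite sum_Sn. rewrite (S_INR (S i)).
  assert (sum_n x i <= INR (S i) * Hh) by (apply IHi; intros; apply H; lia).
  specialize (H (S i) (le_n _)). change (plus (sum_n x i) (x (S i))) with (sum_n x i + x (S i)). lra. Qed.

Lemma tail_bound a L j Tt : isC a L -> 0 <= Tt ->
  (forall k, Cnorm (a (S j + k)%nat) <= Tt * (1/2) ^ (S j + k)) ->
  Cnorm (Csub L (@sum_n C_AbelianMonoid a j)) <= Tt * (1/2) ^ j.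
Proof.
  intros HL HT Hb. pose proof (isC_tail a L j HL) as Ht.
  rewrite <- Series_geom_tail, <- Series_scal_l.
  eapply isC_norm_le. exact Ht. apply (@ex_series_scal_l R_AbsRing R_NormedModule). apply ex_geom_tail.
  intros k. apply Hb.
Qed.

Lemma upper_dec a L j Hh Tt : isC a L -> 0 <= Tt ->
  (forall n, (n <= j)%nat -> Cnorm (a n) <= Hh) ->
  (forall k, Cnorm (a (S j + k)%nat) <= Tt * (1/2) ^ (S j + k)) ->
  Cnorm L <= INR (S j) * Hh + Tt * (1/2) ^ j.
Proof.
  intros HL HT Hh' Hb. pose proof (tail_bound a L j Tt HL HT Hb).
  assert (Cnorm (@sum_n C_AbelianMonoid a j) <= INR (S j) * Hh).
  { eapply Rle_trans. apply norm_sum_n_le. apply sum_bound. auto. }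
  replace L with (Cadd (@sum_n C_AbelianMonoid a j) (Csub L (@sum_n C_AbelianMonoid a j))).
  eapply Rle_trans. apply Cnorm_add. lra.
  generalize (@sum_n C_AbelianMonoid a j). intros; cring.
Qed.

Lemma lower_dec a L i Hh Tt : isC a L -> 0 <= Tt ->
  (forall n, (n <= i)%nat -> Cnorm (a n) <= Hh) ->
  (forall k, Cnorm (a (S (S i) + k)%nat) <= Tt * (1/2) ^ (S (S i) + k)) ->
  Cnorm (a (S i)) - INR (S i) * Hh - Tt * (1/2) ^ (S i) <= Cnorm L.
Proof.
  intros HL HT Hh' Hb. pose proof (tail_bound a L (S i) Tt HL HT Hb).
  assert (Cnorm (@sum_n C_AbelianMonoid a i) <= INR (S i) * Hh).
  { eapply Rle_trans. apply norm_sum_n_le. apply sum_bound. auto. }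
  rewrite sum_Sn in H.
  change (@plus C_AbelianMonoid (@sum_n C_AbelianMonoid a i) (a (S i))) with (Cadd (@sum_n C_AbelianMonoid a i) (a (S i))) in H.
  set (s := @sum_n C_AbelianMonoid a i) in *.
  replace (a (S i)) with (Cadd L (Cadd (Copp s) (Copp (Csub L (Cadd s (a (S i))))))) at 1.
  2:{ generalize (a (S i)). intros; cring. }
  pose proof (Cnorm_add L (Cadd (Copp s) (Copp (Csub L (Cadd s (a (S i))))))) as A1.
  pose proof (Cnorm_add (Copp s) (Copp (Csub L (Cadd s (a (S i)))))) as A2.
  rewrite !Cnorm_opp in A2. lra.
Qed.

Lemma lower_gen a L i Hh T0 Mj : isC a L -> 0 <= T0 ->
  (forall n, (n <= i)%nat -> Cnorm (a n) <= Hh) ->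
  (forall k, Cnorm (a (S (S i) + k)%nat) <= T0 * (1/2) ^ (S (S i) + k)) ->
  Mj <= Cnorm (a (S i)) -> Mj - INR (S i) * Hh - T0 <= Cnorm L.
Proof. intros. pose proof (lower_dec a L i Hh T0 H H0 H1 H2).
  assert ((1/2)^(S i) <= 1) by (apply pow_le1'; lra). assert (T0 * (1/2)^(S i) <= T0) by nra. lra. Qed.

Lemma numfin R U T0 B i q Q' : 1 < R -> 0 <= U -> 0 <= T0 -> 0 <= B ->
  (q + 1 + (i+2)^3 * (q+1) <= Q')%nat -> 2 * U + T0 + B + 1 <= (INR i + 2) * (R - 1) ->
  B + 1 <= / (INR i + 2) * R ^ Q' - (INR i + 1) * (2 * U * (INR q + 1) * R ^ (S q)) - T0.
Proof.
  intros HR HU HT HB Hg Hi.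
  set (g := ((i+2)^3 * (q+1))%nat).
  assert (Hg' : INR g = (INR i + 2)^3 * (INR q + 1)).
  { unfold g. rewrite mult_INR, pow_INR, !plus_INR. simpl. ring. }
  pose proof (pos_INR i). pose proof (pos_INR q).
  assert (E1 : R ^ (S q) * R ^ g <= R ^ Q').
  { rewrite <- pow_add. apply pow_incr_exp. lra. unfold g. lia. }
  pose proof (Bernoulli_ineq (R - 1) g ltac:(lra)) as Hb. replace (1 + (R - 1)) with R in Hb by ring.
  assert (HRq : 1 <= R ^ S q) by (apply pow_ge1'; lra).
  set (P := (INR q + 1) * R ^ S q).
  assert (HP : 1 <= P) by (unfold P; nra).
  assert (E2 : (INR i + 2)^2 * (R - 1) * P <= / (INR i + 2) * R ^ Q').
  { apply Rmult_le_reg_l with (INR i + 2). lra. replace ((INR i + 2) * (/ (INR i + 2) * R ^ Q')) with (R ^ Q') by (field; lra).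
    eapply Rle_trans. 2: exact E1.
    assert (INR g * (R - 1) <= R ^ g) by lra.
    rewrite Hg' in H1. unfold P.
    replace ((INR i + 2) * ((INR i + 2) ^ 2 * (R - 1) * ((INR q + 1) * R ^ S q))) with
      (R ^ S q * ((INR i + 2) ^ 3 * (INR q + 1) * (R - 1))) by ring.
    apply Rmult_le_compat_l. lra. exact H1. }
  assert (E3 : (INR i + 1) * (2 * U * (INR q + 1) * R ^ S q) <= (INR i + 2) * (2 * U) * P).
  { unfold P. replace ((INR i + 1) * (2 * U * (INR q + 1) * R ^ S q)) with ((INR i + 1) * (2 * U) * ((INR q + 1) * R ^ S q)) by ring.
    apply Rmult_le_compat_r. nra. apply Rmult_le_compat_r; lra. }
  assert (E4 : (INR i + 2) * (T0 + B + 1) * P <= (INR i + 2)^2 * (R - 1) * P - (INR i + 2) * (2 * U) * P).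
  { replace ((INR i + 2)^2 * (R - 1) * P - (INR i + 2) * (2 * U) * P) with
      ((INR i + 2) * ((INR i + 2) * (R - 1) - 2 * U) * P) by ring.
    apply Rmult_le_compat_r. lra. apply Rmult_le_compat_l. lra. lra. }
  assert (E5 : T0 + B + 1 <= (INR i + 2) * (T0 + B + 1) * P).
  { assert (1 <= (INR i + 2) * P) by nra.
    replace ((INR i + 2) * (T0 + B + 1) * P) with ((T0 + B + 1) * ((INR i + 2) * P)) by ring.
    rewrite <- (Rmult_1_r (T0 + B + 1)) at 1. apply Rmult_le_compat_l; lra. }
  lra.
Qed.

Section Main.
Variable th : R.
Variable Q : nat -> nat.
Variable ds : nat -> R.
Hypothesis HQ1 : forall n, (n + 1 <= Q n)%nat.
Hypothesis HQ2 : forall n, (Q n + 1 + (n+2)^3 * (Q n + 1) <= Q (S n))%nat.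
Hypothesis Hd3 : forall n, exists p : Z, INR (Q n) * th = IZR p + ds n.
Hypothesis Hd4 : forall n, ds n <> 0.
Hypothesis Hd5 : forall n, Rabs (ds n) <= (/ (4 * (INR n + 1))) ^ (Q n).
Hypothesis Hd6 : forall n, / (2 * INR (Q (S n))) <= Rabs (ds n).

Definition lam := Ce th.
Definition eps_ (n : nat) := (/ (4 * (INR n + 1))) ^ (Q n).

Lemma Q_incr n : (Q n < Q (S n))%nat.
Proof. pose proof (HQ2 n). lia. Qed.

Lemma Q_mono n m : (n <= m)%nat -> (Q n <= Q m)%nat.
Proof. intros H. induction H. lia. pose proof (Q_incr m). lia. Qed.

Lemma eps_ge0 n : 0 <= eps_ n.
Proof. unfold eps_. apply pow_le. left. apply Rinv_0_lt_compat. pose proof (pos_INR n). lra. Qed.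

Lemma lamQ n : Cpow lam (Q n) = Ce (ds n).
Proof. unfold lam. rewrite Cpow_Ce. destruct (Hd3 n) as [p Hp]. rewrite Hp, Ce_add, Ce_IZR.
  generalize (Ce (ds n)); intros; cring. Qed.

Lemma lam_norm N : Cnorm (Cpow lam N) = 1.
Proof. unfold lam. apply Cnorm_Ce_pow. Qed.

Lemma lam1 n : Cnorm (Csub C1 (Cpow lam (Q n))) <= 2 * PI * eps_ n.
Proof. rewrite lamQ. eapply Rle_trans. apply norm_1_Ce_le. pose proof PI2_3_2.
  apply Rmult_le_compat_l. lra. apply Hd5. Qed.

Lemma KB r n : 0 <= r -> 2 * r <= INR n + 1 ->
  (INR (Q n) + 1) ^ 2 * eps_ n * r ^ (Q n) <= (1/2) ^ n.
Proof.
  intros Hr Hn. pose proof (pos_INR n). unfold eps_.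
  pose proof (pow4 (Q n)). pose proof (eps_ge0 n). unfold eps_ in H1.
  pose proof (pow_le r (Q n) Hr).
  apply Rle_trans with (4 ^ Q n * (/ (4 * (INR n + 1))) ^ Q n * r ^ Q n).
  { apply Rmult_le_compat_r; auto. apply Rmult_le_compat_r; auto. }
  rewrite <- !Rpow_mult_distr.
  replace (4 * / (4 * (INR n + 1)) * r) with (r / (INR n + 1)) by (field; lra).
  apply Rle_trans with ((1/2) ^ (Q n)).
  { apply pow_incr. split. apply Rdiv_le_0_compat; lra.
    apply Rmult_le_reg_r with (INR n + 1). lra. unfold Rdiv. rewrite Rmult_assoc, Rinv_l by lra. lra. }
  apply pow_decr. lra. pose proof (HQ1 n). lia.
Qed.

Lemma MJ_ent b K : 0 <= K -> (forall n, Cnorm (b n) <= K * Cnorm (Csub C1 (Cpow lam (Q n)))) ->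
  forall r, 0 <= r -> MJ Q b r.
Proof.
  intros HK Hb r Hr. destruct (INR_unbounded (2 * r)) as [n0 Hn0].
  unfold MJ. apply (ex_series_incr_n (mjt Q b r) n0).
  apply (@ex_series_le R_AbsRing R_CompleteNormedModule _ (fun k => K * (2 * PI) * (1/2) ^ (n0 + k))).
  - intros k. change (norm ?x) with (Rabs x). rewrite Rabs_pos_eq by (apply mjt_ge0; lra).
    set (n := (n0 + k)%nat). unfold mjt.
    assert (2 * r <= INR n + 1). { unfold n. rewrite plus_INR. pose proof (pos_INR k). lra. }
    pose proof (KB r n Hr H). pose proof (Hb n). pose proof (lam1 n).
    pose proof (Cnorm_ge0 (Csub C1 (Cpow lam (Q n)))). pose proof (Cnorm_ge0 (b n)).
    pose proof (pow_le r (Q n) Hr). pose proof (eps_ge0 n). pose proof PI2_3_2.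
    assert (Cnorm (b n) <= K * (2 * PI) * eps_ n).
    { eapply Rle_trans. exact H1. rewrite Rmult_assoc. apply Rmult_le_compat_l; auto. }
    assert (0 <= (INR (Q n) + 1) ^ 2 * r ^ Q n) by (apply Rmult_le_pos; auto; apply pow2_ge_0).
    apply Rle_trans with (K * (2 * PI) * eps_ n * ((INR (Q n) + 1) ^ 2 * r ^ Q n)).
    { rewrite Rmult_assoc. apply Rmult_le_compat_r; auto. }
    replace (K * (2 * PI) * eps_ n * ((INR (Q n) + 1) ^ 2 * r ^ Q n)) with
      (K * (2 * PI) * ((INR (Q n) + 1) ^ 2 * eps_ n * r ^ Q n)) by ring.
    apply Rmult_le_compat_l; auto. apply Rmult_le_pos; lra.
  - apply ex_series_ext with (fun k => scal (K * (2 * PI) * (1/2) ^ n0) ((1/2) ^ k)).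
    intros k. rewrite pow_add. unfold scal; simpl. unfold mult; simpl. ring.
    apply (@ex_series_scal_l R_AbsRing R_NormedModule). apply ex_geom_half.
Qed.


Variable u : nat -> CC.
Variable U : R.
Hypothesis HU : forall m, Cnorm (u m) <= U.

Definition un n := u (Q n).
Definition bN (N : nat) n := Cmul (un n) (Csub C1 (Cpow lam (N * Q n))).
Definition mu := Ce (- th).
Definition bI n := Cmul (un n) (Csub C1 (Cpow mu (Q n))).
Definition bM n := Copp (un n).

Lemma U_ge0 : 0 <= U.
Proof. pose proof (HU 0%nat). pose proof (Cnorm_ge0 (u 0%nat)). lra. Qed.

Lemma bN_bound N n : Cnorm (bN N n) <= (U * INR N) * Cnorm (Csub C1 (Cpow lam (Q n))).
Proof. unfold bN. rewrite Cnorm_mul. rewrite Nat.mul_comm, Cpow_mul.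
  pose proof (Cpow_unit_bound (Cpow lam (Q n)) N (lam_norm _)).
  pose proof (HU (Q n)). pose proof (Cnorm_ge0 (un n)). pose proof (Cnorm_ge0 (Csub C1 (Cpow (Cpow lam (Q n)) N))).
  pose proof (Cnorm_ge0 (Csub C1 (Cpow lam (Q n)))). pose proof (pos_INR N).
  unfold un in *. rewrite Rmult_assoc. apply Rmult_le_compat; auto. Qed.

Lemma bI_bound n : Cnorm (bI n) <= U * Cnorm (Csub C1 (Cpow lam (Q n))).
Proof. unfold bI. rewrite Cnorm_mul. unfold mu, lam. rewrite !Cpow_Ce.
  replace (INR (Q n) * - th) with (- (INR (Q n) * th)) by ring. rewrite Ce_neg_norm.
  apply Rmult_le_compat_r. apply Cnorm_ge0. apply HU. Qed.

Lemma MJ_bN N r : 0 <= r -> MJ Q (bN N) r.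
Proof. intros Hr. apply MJ_ent with (U * INR N); auto. pose proof U_ge0. pose proof (pos_INR N). nra.
  apply bN_bound. Qed.

Lemma MJ_bI r : 0 <= r -> MJ Q bI r.
Proof. intros Hr. apply MJ_ent with U; auto. apply U_ge0. apply bI_bound. Qed.

Lemma MJ_shift b g r : 0 <= r -> Cnorm g = 1 -> MJ Q b r -> MJ Q (fun n => Cmul (b n) (Cpow g (S (Q n)))) r.
Proof. intros Hr Hg H. apply MJ_le with b; auto. intros n. rewrite Cnorm_mul, Cnorm_pow, Hg, pow1. lra. Qed.

Lemma Fs_shift b g z : Fs Q b (Cmul g z) = Fs Q (fun n => Cmul (b n) (Cpow g (S (Q n)))) z.
Proof. apply Fs_ext. intros n. unfold Fterm. rewrite Cpow_mul_l.
  generalize (b n) (Cpow g (S (Q n))) (Cpow z (S (Q n))); intros; cring. Qed.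

Lemma Fs_scal b c r z : 0 <= r -> Cnorm z <= r -> MJ Q b r -> Fs Q (fun n => Cmul c (b n)) z = Cmul c (Fs Q b z).
Proof. intros. rewrite (Fs_comb Q _ b b c C0 r z); auto. generalize (Fs Q b z); intros; cring.
  intros; generalize (b n); intros; cring. Qed.

Lemma lam_mu : Cmul lam mu = C1.
Proof. unfold lam, mu. rewrite <- Ce_add. replace (th + - th) with 0 by ring. apply Ce_0. Qed.

Lemma lam_mu_pow k : Cmul (Cpow lam k) (Cpow mu k) = C1.
Proof. rewrite <- Cpow_mul_l, lam_mu. apply Cpow_C1. Qed.

Definition Amap := Tm Q lam (bN 1).
Definition Ginv := Tm Q mu bI.

Lemma Tm_iter N p : Nat.iter N Amap p = Tm Q (Cpow lam N) (bN N) p.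
Proof.
  induction N.
  - destruct p as [w z]. simpl. unfold Tm; simpl. rewrite Fs_zero.
    2:{ intros n. unfold bN. simpl. generalize (un n); intros; cring. }
    f_equal; cring.
  - simpl Nat.iter. rewrite IHN. destruct p as [w z]. unfold Amap, Tm at 1. simpl fst; simpl snd.
    set (X := Cpow lam N).
    assert (HX : Cnorm X = 1) by apply lam_norm.
    pose proof (Cnorm_ge0 z) as Hz0.
    assert (Hz1 : Cnorm (Cmul X z) = Cnorm z) by (rewrite Cnorm_mul, HX; ring).
    rewrite Fs_shift.
    assert (Key : Cmul X (Fs Q (bN (S N)) z) = Cadd (Cmul X (Fs Q (bN N) z)) (Cmul C1 (Fs Q (fun n => Cmul (bN 1 n) (Cpow X (S (Q n)))) z))).
    { rewrite <- (Fs_scal (bN (S N)) X (Cnorm z) z); auto; try lra; [| apply MJ_bN; lra].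
      apply (Fs_comb Q _ (bN N) _ X C1 (Cnorm z) z); try lra. apply MJ_bN; lra.
      apply MJ_shift; auto; try lra. apply MJ_bN; lra.
      intros n. unfold bN. simpl (S N * Q n)%nat. rewrite Nat.mul_1_l.
      change (Cpow X (S (Q n))) with (Cmul X (Cpow X (Q n))).
      unfold X. rewrite <- Cpow_mul, Cpow_add.
      generalize (un n) (Cpow lam (Q n)) (Cpow lam (N * Q n)) (Cpow lam N). intros. cring. }
    change (Cpow lam (S N)) with (Cmul lam X).
    unfold Tm; simpl fst; simpl snd. f_equal.
    + revert Key. generalize (Fs Q (bN (S N)) z) (Fs Q (bN N) z) (Fs Q (fun n => Cmul (bN 1 n) (Cpow X (S (Q n)))) z).
      intros a b c Key.
      replace (Cmul (Cmul lam X) (Cadd w a)) with (Cmul lam (Cadd (Cmul X w) (Cmul X a))) by (clear Key; cring).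
      rewrite Key. clear Key. cring.
    + clear Key. cring.
Qed.

Lemma C1z z : Cmul C1 z = z.
Proof. cring. Qed.

Lemma Ginv_Amap p : Ginv (Amap p) = p.
Proof.
  destruct p as [w z]. unfold Ginv, Amap, Tm; simpl fst; simpl snd.
  pose proof (Cnorm_ge0 z) as Hz0.
  assert (Hlz : Cnorm (Cmul lam z) = Cnorm z) by (rewrite Cnorm_mul; unfold lam; rewrite Ce_norm; ring).
  rewrite Fs_shift.
  assert (Key : C0 = Cadd (Cmul lam (Fs Q (bN 1) z)) (Cmul C1 (Fs Q (fun n => Cmul (bI n) (Cpow lam (S (Q n)))) z))).
  { rewrite <- (Fs_zero Q (fun _ => C0) z) by auto.
    apply (Fs_comb Q _ (bN 1) _ lam C1 (Cnorm z) z); try lra. apply MJ_bN; lra.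
    apply MJ_shift; try lra. apply Ce_norm. apply MJ_bI; lra.
    intros n. unfold bN, bI. rewrite Nat.mul_1_l.
    change (Cpow lam (S (Q n))) with (Cmul lam (Cpow lam (Q n))).
    pose proof (lam_mu_pow (Q n)) as E. revert E.
    generalize (un n) (Cpow lam (Q n)) (Cpow mu (Q n)). intros a L M E.
    replace (Cmul (Cmul a (Csub C1 M)) (Cmul lam L)) with (Cmul (Cmul a lam) (Csub L (Cmul L M))) by cring.
    rewrite E. unfold lam. generalize (Ce th). intros. cring. }
  revert Key. generalize (Fs Q (bN 1) z) (Fs Q (fun n => Cmul (bI n) (Cpow lam (S (Q n)))) z). intros a b Key.
  assert (E1 : Cmul mu (Cmul lam z) = z) by (rewrite <- (C1z z) at 2; rewrite <- lam_mu; generalize lam mu; intros; cring).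
  rewrite E1. f_equal.
  replace (Cmul mu (Cadd (Cmul lam (Cadd w a)) b)) with (Cadd (Cmul (Cmul lam mu) w) (Cmul mu (Cadd (Cmul lam a) (Cmul C1 b)))) by
    (generalize lam mu; intros; cring).
  rewrite <- Key, lam_mu. cring.
Qed.

Lemma Amap_Ginv p : Amap (Ginv p) = p.
Proof.
  destruct p as [w z]. unfold Ginv, Amap, Tm; simpl fst; simpl snd.
  pose proof (Cnorm_ge0 z) as Hz0.
  rewrite Fs_shift.
  assert (Key : C0 = Cadd (Cmul C1 (Fs Q bI z)) (Cmul lam (Fs Q (fun n => Cmul (bN 1 n) (Cpow mu (S (Q n)))) z))).
  { rewrite <- (Fs_zero Q (fun _ => C0) z) by auto.
    apply (Fs_comb Q _ bI _ C1 lam (Cnorm z) z); try lra. apply MJ_bI; lra.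
    apply MJ_shift; try lra. apply Ce_norm. apply MJ_bN; lra.
    intros n. unfold bN, bI. rewrite Nat.mul_1_l.
    change (Cpow mu (S (Q n))) with (Cmul mu (Cpow mu (Q n))).
    pose proof (lam_mu_pow (Q n)) as E. pose proof lam_mu as E2. revert E E2.
    generalize (Cpow lam (Q n)) (Cpow mu (Q n)) (un n). intros L M a. generalize lam mu. intros l m E E2.
    replace (Cmul l (Cmul (Cmul a (Csub C1 L)) (Cmul m M))) with (Cmul (Cmul a (Cmul l m)) (Csub M (Cmul L M))) by cring.
    rewrite E, E2. cring. }
  revert Key. generalize (Fs Q bI z) (Fs Q (fun n => Cmul (bN 1 n) (Cpow mu (S (Q n)))) z). intros a b Key.
  assert (E1 : Cmul lam (Cmul mu z) = z) by (rewrite <- (C1z z) at 2; rewrite <- lam_mu; generalize lam mu; intros; cring).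
  rewrite E1. f_equal.
  replace (Cmul lam (Cadd (Cmul mu (Cadd w a)) b)) with (Cadd (Cmul (Cmul lam mu) w) (Cadd (Cmul (Cmul lam mu) (Cmul C1 a)) (Cmul lam b))) by
    (generalize lam mu; intros; cring).
  rewrite lam_mu. replace (Cadd (Cmul C1 w) (Cadd (Cmul C1 (Cmul C1 a)) (Cmul lam b))) with (Cadd w (Cadd (Cmul C1 a) (Cmul lam b))) by (generalize lam; intros; cring).
  rewrite <- Key. cring.
Qed.

Definition Psi := Tm Q C1 un.
Definition Phi := Tm Q C1 bM.

Lemma MJ_un r : 0 <= r < 1 -> MJ Q un r.
Proof. intros. apply (MJ_disk Q HQ1 un U); auto. intros; apply HU. Qed.

Lemma MJ_bM r : 0 <= r < 1 -> MJ Q bM r.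
Proof. intros. apply (MJ_disk Q HQ1 bM U); auto. intros; unfold bM; rewrite Cnorm_opp; apply HU. Qed.

Lemma FM z : Cnorm z < 1 -> Fs Q bM z = Copp (Fs Q un z).
Proof. intros Hz. pose proof (Cnorm_ge0 z).
  rewrite (Fs_comb Q bM un un (Copp C1) C0 (Cnorm z) z); try lra. generalize (Fs Q un z); intros; cring.
  apply MJ_un; lra. apply MJ_un; lra. intros; unfold bM; generalize (un n); intros; cring. Qed.

Lemma Phi_Psi p : CxDisk p -> Phi (Psi p) = p.
Proof. destruct p as [w z]. unfold CxDisk; simpl. intros Hz. unfold Phi, Psi, Tm; simpl fst; simpl snd.
  rewrite !C1z, FM by auto. f_equal. generalize (Fs Q un z); intros; cring. Qed.

Lemma Psi_Phi p : CxDisk p -> Psi (Phi p) = p.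
Proof. destruct p as [w z]. unfold CxDisk; simpl. intros Hz. unfold Phi, Psi, Tm; simpl fst; simpl snd.
  rewrite !C1z, FM by auto. f_equal. generalize (Fs Q un z); intros; cring. Qed.

Lemma conj_disk p : CxDisk p -> Amap p = Phi (Rot th (Psi p)).
Proof.
  destruct p as [w z]. unfold CxDisk; simpl. intros Hz. pose proof (Cnorm_ge0 z).
  unfold Amap, Phi, Psi, Rot, Tm; simpl fst; simpl snd. rewrite !C1z.
  fold lam. rewrite Fs_shift.
  assert (Key : Cmul lam (Fs Q (bN 1) z) = Cadd (Cmul lam (Fs Q un z)) (Cmul C1 (Fs Q (fun n => Cmul (bM n) (Cpow lam (S (Q n)))) z))).
  { rewrite <- (Fs_scal (bN 1) lam (Cnorm z) z); try lra. 2: apply MJ_le with (fun n => Cmul (u (Q n)) (2, 0)); try lra.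
    apply (Fs_comb Q _ un _ lam C1 (Cnorm z) z); try lra. apply MJ_un; lra.
    apply MJ_shift; try lra. apply Ce_norm. apply MJ_bM; lra.
    intros n. unfold bN, bM. rewrite Nat.mul_1_l. change (Cpow lam (S (Q n))) with (Cmul lam (Cpow lam (Q n))).
    generalize (un n) (Cpow lam (Q n)) lam; intros; cring.
    intros n. unfold bN. rewrite Nat.mul_1_l, !Cnorm_mul, Cnorm_real, Rabs_pos_eq by lra.
    apply Rmult_le_compat_l. apply Cnorm_ge0. eapply Rle_trans. apply Cnorm_sub. rewrite Cnorm_C1, lam_norm. lra.
    apply (MJ_disk Q HQ1 _ (U * 2)). intros n. rewrite Cnorm_mul, Cnorm_real, Rabs_pos_eq by lra.
    apply Rmult_le_compat_r. lra. apply HU. lra. }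
  revert Key. generalize (Fs Q (bN 1) z) (Fs Q un z) (Fs Q (fun n => Cmul (bM n) (Cpow lam (S (Q n)))) z). intros a b c Key.
  f_equal. replace (Cmul lam (Cadd w a)) with (Cadd (Cmul lam w) (Cmul lam a)) by (generalize lam; intros; cring).
  rewrite Key. generalize lam; intros; cring.
Qed.

Lemma e_small j : (1 <= j)%nat -> eps_ j <= 1/8 /\ eps_ j <= (1/2) ^ j.
Proof.
  intros Hj. pose proof (pos_INR j). assert (1 <= INR j) by (apply (le_INR 1); lia).
  split.
  - unfold eps_. apply Rle_trans with ((/ (4 * (INR j + 1))) ^ 1).
    apply pow_decr. split. left; apply Rinv_0_lt_compat; lra.
    rewrite <- Rinv_1. apply Rinv_le_contravar; lra. pose proof (HQ1 j); lia.
    simpl. rewrite Rmult_1_r. replace (1/8) with (/ 8) by field. apply Rinv_le_contravar; lra.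
  - pose proof (KB 1 j ltac:(lra) ltac:(lra)). rewrite pow1, Rmult_1_r in H1.
    pose proof (eps_ge0 j). pose proof (pos_INR (Q j)).
    assert (1 <= (INR (Q j) + 1) ^ 2) by nra. nra.
Qed.

Lemma two_bound x : Cnorm x = 1 -> Cnorm (Csub C1 x) <= 2.
Proof. intros H. eapply Rle_trans. apply Cnorm_sub. rewrite Cnorm_C1, H. lra. Qed.

Lemma bN_le2 N n : Cnorm (bN N n) <= 2 * U.
Proof. unfold bN. rewrite Cnorm_mul. pose proof (two_bound _ (lam_norm (N * Q n))).
  pose proof (HU (Q n)). pose proof (Cnorm_ge0 (un n)). pose proof (Cnorm_ge0 (Csub C1 (Cpow lam (N * Q n)))).
  unfold un in *. nra. Qed.

Lemma tail_terms N n z : 1 <= Cnorm z -> (N <= Q n)%nat -> 2 * Cnorm z <= INR n + 1 ->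
  Cnorm (Fterm Q (bN N) z n) <= 2 * PI * U * Cnorm z * (1/2) ^ n /\ Cnorm (Dterm Q (bN N) z n) <= 2 * PI * U * Cnorm z * (1/2) ^ n.
Proof.
  intros Hz HN Hn. set (R := Cnorm z) in *.
  pose proof (bN_bound N n) as Hb. pose proof (lam1 n) as Hl. pose proof (KB R n ltac:(lra) Hn) as HK.
  pose proof U_ge0 as HU0. pose proof PI2_3_2 as HPI. pose proof (eps_ge0 n) as He.
  pose proof (pos_INR (Q n)) as HQn. apply le_INR in HN.
  pose proof (Cnorm_ge0 (Csub C1 (Cpow lam (Q n)))) as H1.
  assert (Hb2 : Cnorm (bN N n) <= 2 * PI * U * INR (Q n) * eps_ n).
  { eapply Rle_trans. exact Hb. pose proof (pos_INR N).
    apply Rle_trans with (U * INR (Q n) * (2 * PI * eps_ n)).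
    apply Rmult_le_compat; auto. apply Rmult_le_pos; auto. apply Rmult_le_compat_l; auto. lra. }
  pose proof (pow_le R (Q n) ltac:(lra)) as HR.
  pose proof (Cnorm_ge0 (bN N n)).
  assert (A : INR (Q n) * (INR (Q n) + 1) <= (INR (Q n) + 1) ^ 2) by (simpl; nra).
  assert (A2 : INR (Q n) <= (INR (Q n) + 1) ^ 2) by (simpl; nra).
  split.
  - unfold Fterm. rewrite Cnorm_mul, Cnorm_pow. fold R. rewrite <- tech_pow_Rmult.
    assert (S1 : Cnorm (bN N n) * (R * R ^ Q n) <= (2 * PI * U * INR (Q n) * eps_ n) * (R * R ^ Q n)).
    { apply Rmult_le_compat_r. nra. auto. }
    assert (S2 : INR (Q n) * eps_ n * R ^ Q n <= (INR (Q n) + 1) ^ 2 * eps_ n * R ^ Q n).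
    { apply Rmult_le_compat_r; auto. apply Rmult_le_compat_r; auto. }
    assert (S3 : 0 <= 2 * PI * U * R) by (apply Rmult_le_pos; nra).
    assert (S4 : (2 * PI * U * R) * (INR (Q n) * eps_ n * R ^ Q n) <= (2 * PI * U * R) * (1/2)^n).
    { apply Rmult_le_compat_l; auto. lra. }
    replace ((2 * PI * U * INR (Q n) * eps_ n) * (R * R ^ Q n)) with ((2 * PI * U * R) * (INR (Q n) * eps_ n * R ^ Q n)) in S1 by ring.
    lra.
  - unfold Dterm. rewrite !Cnorm_mul, Cnorm_pow, Cnorm_real, Rabs_pos_eq by apply pos_INR. rewrite S_INR. fold R.
    apply Rle_trans with (2 * PI * U * INR (Q n) * eps_ n * (INR (Q n) + 1) * R ^ Q n).
    apply Rmult_le_compat_r; auto. apply Rmult_le_compat_r. lra. auto.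
    apply Rle_trans with (2 * PI * U * ((INR (Q n) + 1) ^ 2 * eps_ n * R ^ Q n)).
    + replace (2 * PI * U * INR (Q n) * eps_ n * (INR (Q n) + 1) * R ^ Q n) with
        ((2 * PI * U * eps_ n * R ^ Q n) * (INR (Q n) * (INR (Q n) + 1))) by ring.
      replace (2 * PI * U * ((INR (Q n) + 1) ^ 2 * eps_ n * R ^ Q n)) with ((2 * PI * U * eps_ n * R ^ Q n) * (INR (Q n) + 1) ^ 2) by ring.
      apply Rmult_le_compat_l; auto. apply Rmult_le_pos; auto. nra.
    + apply Rle_trans with (2 * PI * U * (1/2)^n). apply Rmult_le_compat_l; auto. nra.
      pose proof (pow_le (1/2) n ltac:(lra)). assert (0 <= 2 * PI * U) by nra.
      replace (2 * PI * U * R * (1/2)^n) with ((2 * PI * U * (1/2)^n) * R) by ring.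
      rewrite <- (Rmult_1_r (2 * PI * U * (1/2)^n)) at 1. apply Rmult_le_compat_l; nra.
Qed.

Lemma Cnorm_1_sub_pow_mul a b : Cnorm (Csub C1 (Cpow lam (a * b))) <= INR b * Cnorm (Csub C1 (Cpow lam a)).
Proof. rewrite Cpow_mul. apply Cpow_unit_bound. apply lam_norm. Qed.

Lemma recur w z : 1 < Cnorm z -> forall eps, eps > 0 -> forall N0, exists N, (N >= N0)%nat /\
  C2norm (C2sub (Nat.iter N Amap (w, z)) (w, z)) < eps.
Proof.
  intros Hz eps Heps N0. set (R := Cnorm z) in *.
  pose proof U_ge0 as HU0. pose proof PI2_3_2 as HPI. pose proof (Cnorm_ge0 w) as Hw.
  set (C := 2 * PI * (Cnorm w + R) + 4 * PI * U * R).
  assert (HC : 0 <= C) by (unfold C; assert (0 <= PI * U * R) by (apply Rmult_le_pos; [apply Rmult_le_pos|]; lra); assert (0 <= PI * (Cnorm w + R)) by (apply Rmult_le_pos; lra); lra).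
  destruct (pow_lt_1_zero (1/2) ltac:(rewrite Rabs_pos_eq; lra) (eps / (C + 1)) ltac:(apply Rdiv_lt_0_compat; lra)) as [J HJ].
  destruct (INR_unbounded (2 * R)) as [J2 HJ2].
  set (j := Nat.max (Nat.max J J2) (Nat.max N0 1)).
  assert (Hj1 : (1 <= j)%nat) by (unfold j; lia).
  assert (HjR : 2 * R <= INR j + 1).
  { assert (INR J2 <= INR j) by (apply le_INR; unfold j; lia). lra. }
  pose proof (HJ j ltac:(unfold j; lia)) as Hpj. rewrite Rabs_pos_eq in Hpj by (apply pow_le; lra).
  exists (Q j). split. pose proof (HQ1 j). unfold j in *. lia.
  rewrite Tm_iter. unfold Tm, C2sub; simpl fst; simpl snd.
  set (X := Cpow lam (Q j)).
  assert (HX1 : Cnorm (Csub C1 X) <= 2 * PI * (1/2)^j).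
  { eapply Rle_trans. apply lam1. apply Rmult_le_compat_l. lra. apply e_small; auto. }
  set (F := Fs Q (bN (Q j)) z).
  assert (HF : Cnorm F <= 2 * (2 * PI * U * R * (1/2)^j)).
  { pose proof (Fs_spec Q (bN (Q j)) R z ltac:(unfold R; apply Cnorm_ge0) (Rle_refl _) (MJ_bN (Q j) R ltac:(unfold R; apply Cnorm_ge0))) as Hs.
    fold F in Hs.
    set (Hh := 2 * PI * U * INR (Q j) * eps_ j * R ^ (S (Q j))).
    eapply Rle_trans. apply (upper_dec (Fterm Q (bN (Q j)) z) F j Hh (2 * PI * U * R)); auto.
    - apply Rmult_le_pos; nra.
    - intros n Hn. unfold Fterm. rewrite Cnorm_mul, Cnorm_pow. fold R.
      assert (B1 : Cnorm (bN (Q j) n) <= U * INR (Q j) * (2 * PI * eps_ j)).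
      { unfold bN. rewrite Cnorm_mul. pose proof (Cnorm_1_sub_pow_mul (Q j) (Q n)).
        pose proof (lam1 j). pose proof (HU (Q n)). unfold un.
        pose proof (Cnorm_ge0 (u (Q n))). pose proof (Cnorm_ge0 (Csub C1 (Cpow lam (Q j * Q n)))).
        pose proof (Cnorm_ge0 (Csub C1 (Cpow lam (Q j)))). pose proof (pos_INR (Q n)).
        assert (INR (Q n) <= INR (Q j)) by (apply le_INR, Q_mono; auto).
        replace (U * INR (Q j) * (2 * PI * eps_ j)) with (U * (INR (Q j) * (2 * PI * eps_ j))) by ring.
        apply Rmult_le_compat; auto. eapply Rle_trans. exact H. apply Rmult_le_compat; auto. }
      assert (B2 : R ^ S (Q n) <= R ^ S (Q j)). { apply pow_incr_exp. lra. pose proof (Q_mono n j Hn). lia. }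
      pose proof (eps_ge0 j). pose proof (pos_INR (Q j)). pose proof (Cnorm_ge0 (bN (Q j) n)).
      pose proof (pow_le R (S (Q n)) ltac:(lra)).
      unfold Hh. replace (2 * PI * U * INR (Q j) * eps_ j * R ^ S (Q j)) with ((U * INR (Q j) * (2 * PI * eps_ j)) * R ^ S (Q j)) by ring.
      apply Rmult_le_compat; auto.
    - intros k. refine (proj1 (tail_terms (Q j) (S j + k)%nat z _ _ _)). fold R; lra. apply Q_mono; lia.
      fold R. rewrite plus_INR, S_INR. pose proof (pos_INR k). lra.
    - assert (INR (S j) * Hh <= 2 * PI * U * R * (1/2)^j).
      { unfold Hh. pose proof (KB R j ltac:(lra) HjR). pose proof (eps_ge0 j). pose proof (pos_INR (Q j)).
        assert (INR (S j) <= INR (Q j) + 1). { rewrite <- S_INR. apply le_INR. pose proof (HQ1 j). lia. }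
        pose proof (pow_le R (Q j) ltac:(lra)). rewrite <- tech_pow_Rmult.
        assert (0 <= 2 * PI * U * R) by (apply Rmult_le_pos; nra).
        replace (INR (S j) * (2 * PI * U * INR (Q j) * eps_ j * (R * R ^ Q j))) with
          ((2 * PI * U * R) * (INR (S j) * INR (Q j) * eps_ j * R ^ Q j)) by ring.
        apply Rmult_le_compat_l; auto. eapply Rle_trans. 2: exact H.
        apply Rmult_le_compat_r; auto. apply Rmult_le_compat_r; auto.
        pose proof (pos_INR (S j)). assert (INR (S j) * INR (Q j) <= (INR (Q j)+1) * INR (Q j)) by (apply Rmult_le_compat_r; auto). nra. }
      lra. }
  eapply Rle_lt_trans. apply C2norm_le. simpl fst; simpl snd.
  replace (Csub (Cmul X (Cadd w F)) w) with (Cadd (Cmul (Copp (Csub C1 X)) w) (Cmul X F)) by (generalize F X; intros; cring).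
  replace (Csub (Cmul X z) z) with (Cmul (Copp (Csub C1 X)) z) by (generalize X; intros; cring).
  pose proof (Cnorm_add (Cmul (Copp (Csub C1 X)) w) (Cmul X F)).
  assert (HXn : Cnorm X = 1) by apply lam_norm. rewrite !Cnorm_mul, Cnorm_opp, HXn in H. rewrite !Cnorm_mul, Cnorm_opp. fold R.
  pose proof (Cnorm_ge0 (Csub C1 X)).
  assert (Cnorm (Csub C1 X) * Cnorm w <= 2 * PI * (1/2)^j * Cnorm w) by (apply Rmult_le_compat_r; auto).
  assert (Cnorm (Csub C1 X) * R <= 2 * PI * (1/2)^j * R) by (apply Rmult_le_compat_r; unfold R; auto; apply Cnorm_ge0).
  assert (C * (1/2)^j < eps).
  { apply Rmult_lt_compat_l with (r := C + 1) in Hpj; [|lra].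
    replace ((C + 1) * (eps / (C + 1))) with eps in Hpj by (field; lra).
    pose proof (pow_le (1/2) j ltac:(lra)). nra. }
  unfold C in H3. lra.
Qed.

Lemma unbdd w z M : 1 < Cnorm z ->
  (forall J, exists n, (n >= J)%nat /\ Cnorm (u (Q n)) > / (INR n + 1)) ->
  exists N, M < Cnorm (Fs Q (bN N) z) - Cnorm w /\ M < Cnorm (Fd Q (bN N) z).
Proof.
  intros Hz HE. set (R := Cnorm z) in *.
  pose proof U_ge0 as HU0. pose proof PI2_3_2 as HPI. pose proof (Cnorm_ge0 w) as Hw.
  set (T0 := 2 * PI * U * R).
  assert (HT0 : 0 <= T0) by (unfold T0; assert (0 <= PI * U * R) by (apply Rmult_le_pos; [apply Rmult_le_pos|]; lra); lra).
  set (B := Rabs M + Cnorm w + 1).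
  assert (HB : 0 <= B) by (unfold B; pose proof (Rabs_pos M); lra).
  destruct (INR_unbounded (2 * R)) as [J1 HJ1].
  destruct (INR_unbounded ((2 * U + T0 + B + 1) / (R - 1))) as [J2 HJ2].
  destruct (HE (Nat.max (Nat.max J1 J2) 2)) as [j [Hj Huj]].
  destruct j as [|i]. lia.
  assert (Hi1 : (1 <= i)%nat) by lia.
  pose proof (pos_INR i) as Hi0.
  assert (HjR : 2 * R <= INR (S i) + 1).
  { assert (INR J1 <= INR (S i)) by (apply le_INR; lia). lra. }
  assert (HiK : 2 * U + T0 + B + 1 <= (INR i + 2) * (R - 1)).
  { assert (INR J2 <= INR (S i)) by (apply le_INR; lia). rewrite S_INR in H.
    apply Rmult_le_reg_r with (/ (R - 1)). apply Rinv_0_lt_compat; lra.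
    replace ((INR i + 2) * (R - 1) * / (R - 1)) with (INR i + 2) by (field; lra). unfold Rdiv in HJ2. lra. }
  set (j := S i) in *.
  set (d := ds j).
  destruct (e_small j ltac:(unfold j; lia)) as [He8 _].
  assert (Hd : Rabs d <= 1/8) by (pose proof (Hd5 j); unfold eps_ in He8; unfold d; lra).
  assert (Hd0 : 0 < Rabs d) by (apply Rabs_pos_lt; apply Hd4).
  set (x := / (6 * Rabs d)).
  assert (Hx : 1 <= x).
  { unfold x. rewrite <- Rinv_1. apply Rinv_le_contravar; lra. }
  destruct (archimed x) as [Hup1 Hup2].
  set (N := Z.to_nat (up x)).
  assert (HN : INR N = IZR (up x)).
  { unfold N. rewrite INR_IZR_INZ, Z2Nat.id. reflexivity. apply le_IZR. lra. }
  assert (HNd1 : 1/6 <= INR N * Rabs d).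
  { rewrite HN. replace (1/6) with (x * Rabs d) by (unfold x; field; lra). apply Rmult_le_compat_r; lra. }
  assert (HNd2 : INR N * Rabs d <= 1/3).
  { rewrite HN. apply Rle_trans with ((x + 1) * Rabs d). apply Rmult_le_compat_r; lra.
    replace ((x + 1) * Rabs d) with (1/6 + Rabs d) by (unfold x; field; lra). lra. }
  assert (HNQ : (N <= Q (S j))%nat).
  { apply INR_le. pose proof (Hd6 j) as H6. fold d in H6.
    pose proof (pos_INR (Q (S j))). assert (0 < INR (Q (S j))) by (pose proof (HQ1 (S j)); apply lt_0_INR; lia).
    assert (INR N <= 2 * x) by (rewrite HN; lra).
    assert (x * 3 <= INR (Q (S j))).
    { unfold x. apply Rmult_le_reg_r with (Rabs d). lra.
      replace (/ (6 * Rabs d) * 3 * Rabs d) with (1/2) by (field; lra).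
      apply Rmult_le_reg_l with (/ INR (Q (S j))). apply Rinv_0_lt_compat; lra.
      replace (/ INR (Q (S j)) * (INR (Q (S j)) * Rabs d)) with (Rabs d) by (field; lra).
      replace (/ INR (Q (S j)) * (1/2)) with (/ (2 * INR (Q (S j)))) by (field; lra). exact H6. }
    lra. }
  assert (Hmain : 1 <= Cnorm (Csub C1 (Cpow lam (N * Q j)))).
  { rewrite Nat.mul_comm, Cpow_mul, lamQ, Cpow_Ce. apply norm_1_Ce_ge.
    rewrite Rabs_mult, Rabs_pos_eq by apply pos_INR. fold d. lra. }
  assert (HbNj : / (INR j + 1) <= Cnorm (bN N j)).
  { unfold bN, un. rewrite Cnorm_mul. pose proof (Cnorm_ge0 (u (Q j))). nra. }
  assert (HR1 : 1 <= R) by lra.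
  assert (HRQ : 1 <= R ^ Q j) by (apply pow_ge1'; lra).
  assert (Hinv : 0 < / (INR j + 1)) by (apply Rinv_0_lt_compat; pose proof (pos_INR j); lra).
  set (Hh := 2 * U * (INR (Q i) + 1) * R ^ S (Q i)).
  assert (Hnum : B + 1 <= / (INR i + 2) * R ^ Q j - (INR i + 1) * Hh - T0).
  { unfold Hh. apply numfin; auto. }
  replace (INR i + 2) with (INR j + 1) in Hnum by (unfold j; rewrite S_INR; ring).
  replace (INR i + 1) with (INR (S i)) in Hnum by (rewrite S_INR; ring).
  assert (Htail : forall k, (N <= Q (S j + k))%nat /\ 2 * R <= INR (S j + k) + 1).
  { intros k. split. eapply Nat.le_trans. exact HNQ. apply Q_mono. lia.
    assert (INR j <= INR (S j + k)) by (apply le_INR; lia). lra. }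
  assert (HQi : forall n, (n <= i)%nat -> (Q n <= Q i)%nat) by (intros; apply Q_mono; auto).
  pose proof (Cnorm_ge0 z).
  exists N. split.
  - pose proof (Fs_spec Q (bN N) R z ltac:(lra) (Rle_refl _) (MJ_bN N R ltac:(lra))) as Hs.
    pose proof (lower_gen (Fterm Q (bN N) z) (Fs Q (bN N) z) i Hh T0 (/ (INR j + 1) * R ^ Q j) Hs HT0) as HL.
    assert (Cnorm (Fs Q (bN N) z) >= B + 1).
    { apply Rle_ge. eapply Rle_trans. exact Hnum. apply HL.
      - intros n Hn. unfold Fterm, Hh. rewrite Cnorm_mul, Cnorm_pow. fold R.
        pose proof (bN_le2 N n). pose proof (Cnorm_ge0 (bN N n)).
        assert (R ^ S (Q n) <= R ^ S (Q i)) by (apply pow_incr_exp; auto; specialize (HQi n Hn); lia).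
        pose proof (pow_le R (S (Q n)) ltac:(lra)). pose proof (pos_INR (Q i)).
        assert (1 <= R ^ S (Q i)) by (apply pow_ge1'; lra).
        apply Rle_trans with (2 * U * R ^ S (Q i)). apply Rmult_le_compat; auto.
        replace (2 * U * (INR (Q i) + 1) * R ^ S (Q i)) with ((2 * U * R ^ S (Q i)) * (INR (Q i) + 1)) by ring.
        rewrite <- (Rmult_1_r (2 * U * R ^ S (Q i))) at 1. apply Rmult_le_compat_l. nra. lra.
      - intros k. destruct (Htail k). refine (proj1 (tail_terms N (S (S i) + k) z _ _ _)); auto.
      - unfold Fterm. rewrite Cnorm_mul, Cnorm_pow. fold R. rewrite <- tech_pow_Rmult.
        apply Rmult_le_compat; try lra. exact HbNj. change (Q (S i)) with (Q j). pose proof (pow_le R (Q j) ltac:(lra)). nra. }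
    pose proof (Rle_abs M). unfold B in H0. lra.
  - pose proof (Fd_spec Q (bN N) R z ltac:(lra) (Rle_refl _) (MJ_bN N R ltac:(lra))) as Hs.
    pose proof (lower_gen (Dterm Q (bN N) z) (Fd Q (bN N) z) i Hh T0 (/ (INR j + 1) * R ^ Q j) Hs HT0) as HL.
    assert (Cnorm (Fd Q (bN N) z) >= B + 1).
    { apply Rle_ge. eapply Rle_trans. exact Hnum. apply HL.
      - intros n Hn. unfold Dterm, Hh. rewrite !Cnorm_mul, Cnorm_pow, Cnorm_real, Rabs_pos_eq by apply pos_INR. fold R.
        rewrite S_INR.
        pose proof (bN_le2 N n). pose proof (Cnorm_ge0 (bN N n)).
        assert (R ^ Q n <= R ^ S (Q i)) by (apply pow_incr_exp; auto; specialize (HQi n Hn); lia).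
        pose proof (pow_le R (Q n) ltac:(lra)). pose proof (pos_INR (Q i)). pose proof (pos_INR (Q n)).
        assert (INR (Q n) <= INR (Q i)) by (apply le_INR; auto).
        apply Rle_trans with (2 * U * (INR (Q n) + 1) * R ^ Q n).
        apply Rmult_le_compat_r; auto. apply Rmult_le_compat_r; lra.
        apply Rmult_le_compat; auto. nra. apply Rmult_le_compat_l; lra.
      - intros k. destruct (Htail k). refine (proj2 (tail_terms N (S (S i) + k) z _ _ _)); auto.
      - unfold Dterm. rewrite !Cnorm_mul, Cnorm_pow, Cnorm_real, Rabs_pos_eq by apply pos_INR. fold R. rewrite S_INR.
        pose proof (pos_INR (Q j)). pose proof (pow_le R (Q j) ltac:(lra)).
        apply Rle_trans with (Cnorm (bN N j) * R ^ Q j). apply Rmult_le_compat_r; auto.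
        change (S i) with j. pose proof (Cnorm_ge0 (bN N j)).
        assert (0 <= Cnorm (bN N j) * R ^ Q j * INR (Q j)) by (apply Rmult_le_pos; auto; apply Rmult_le_pos; auto).
        nra. }
    pose proof (Rle_abs M). unfold B in H0. lra.
Qed.

End Main.

Definition Oset (q' : nat -> nat) (j : nat) (u : nat -> CC) : Prop :=
  linf u /\ exists n, (n >= j)%nat /\ Cnorm (u (q' n)) > / (INR n + 1).

Lemma Oset_open q' j : linf_open (Oset q' j).
Proof.
  split. intros u [H _]; auto.
  intros u [Hl [n [Hn Hu]]]. exists (Cnorm (u (q' n)) - / (INR n + 1)). split. lra.
  intros v Hv Hvu. split; auto. exists n. split; auto.
  pose proof (Cnorm_sub_ge (u (q' n)) (Csub (v (q' n)) (u (q' n)))).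
  replace (Cadd (u (q' n)) (Csub (v (q' n)) (u (q' n)))) with (v (q' n)) in H by (generalize (u (q' n)) (v (q' n)); intros; cring).
  specialize (Hvu (q' n)). lra.
Qed.

Lemma E2_dense q' : linf_dense (fun u => forall j, Oset q' j u).
Proof.
  split. intros u H. apply (H 0%nat).
  intros v [Mv HMv] eps Heps.
  set (u := fun m => if Rle_dec (Cnorm (v m)) (eps / 4) then Cadd (v m) (eps / 2, 0) else v m).
  assert (Hre : Cnorm (eps / 2, 0) = eps / 2) by (rewrite Cnorm_real, Rabs_pos_eq; lra).
  assert (Hlow : forall m, eps / 4 <= Cnorm (u m)).
  { intros m. unfold u. destruct (Rle_dec (Cnorm (v m)) (eps / 4)).
    - pose proof (Cnorm_sub_ge (eps / 2, 0) (v m)). rewrite Hre in H.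
      replace (Cadd (eps / 2, 0) (v m)) with (Cadd (v m) (eps / 2, 0)) in H by (generalize (v m); intros; cring). lra.
    - lra. }
  exists u. split.
  - intros j. split.
    + exists (Mv + eps / 2). intros m. unfold u. destruct (Rle_dec (Cnorm (v m)) (eps / 4)).
      eapply Rle_trans. apply Cnorm_add. rewrite Hre. specialize (HMv m). lra. specialize (HMv m). lra.
    + destruct (INR_unbounded (4 / eps)) as [N1 HN1]. exists (Nat.max j N1). split. lia.
      eapply Rlt_le_trans. 2: apply Hlow.
      assert (INR N1 <= INR (Nat.max j N1)) by (apply le_INR; lia).
      assert (4 / eps < INR (Nat.max j N1) + 1) by lra.
      apply Rmult_lt_reg_r with (INR (Nat.max j N1) + 1). pose proof (pos_INR (Nat.max j N1)); lra.
      rewrite Rinv_l by (pose proof (pos_INR (Nat.max j N1)); lra).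
      apply Rmult_lt_compat_l with (r := eps / 4) in H0; [|lra].
      replace (eps / 4 * (4 / eps)) with 1 in H0 by (field; lra). lra.
  - intros m. unfold u. destruct (Rle_dec (Cnorm (v m)) (eps / 4)).
    + replace (Csub (Cadd (v m) (eps / 2, 0)) (v m)) with (eps / 2, 0) by (generalize (v m); intros; cring). lra.
    + replace (Csub (v m) (v m)) with C0 by (generalize (v m); intros; cring). rewrite Cnorm_C0. lra.
Qed.

Theorem theorem1 :
  forall (theta : R) (Sset : C2 -> Prop),
    irrational theta ->
    cv_infty (fun n => ln (IZR (cf_q theta (S n))) / IZR (cf_q theta n)) ->
    (* S is a countable dense subset of C x {|z| > 1} *)
    (forall p, Sset p -> CxOut p) ->
    (exists f : nat -> C2, forall p, Sset p -> exists n, f n = p) ->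
    (forall p, CxOut p -> forall eps, eps > 0 ->
        exists s, Sset s /\ C2norm (C2sub s p) < eps) ->
    exists k : nat -> nat,
      (forall n, (k n < k (S n))%nat) /\
      let q' := fun n => Z.to_nat (cf_q theta (k n)) in
      exists E2 : (nat -> CC) -> Prop,
        linf_dense E2 /\ linf_Gdelta E2 /\
        forall u, E2 u ->
          exists phi : CC -> CC,
            (* the defining series converges everywhere, with sum phi *)
            (forall z, Ccv (fun N => Cmul (Cmul z (Ce theta))
                                          (Csum (phi_term theta q' u z) N)) (phi z)) /\
            let A := A_map theta phi in
            holo_automorphism_C2 A /\
            (* (i) *)
            ((forall p, CxDisk p -> CxDisk (A p)) /\
             (forall p, CxDisk p -> exists p0, CxDisk p0 /\ A p0 = p) /\
             exists Psi Phi : C2 -> C2, biholo_of CxDisk Psi Phi /\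
               forall p, CxDisk p -> A p = Phi (Rot theta (Psi p))) /\
            (* (ii) *)
            (forall p, CxOut p ->
               (forall M, exists N, C2norm (Nat.iter N A p) > M) /\
               (forall eps, eps > 0 -> forall N0, exists N, (N >= N0)%nat /\
                   C2norm (C2sub (Nat.iter N A p) p) < eps)) /\
            (* (iii) *)
            (forall p, Sset p -> forall M, exists N L,
               has_cderiv (Nat.iter N A) p L /\ Mat2_norm L > M).
Proof.
  intros th Sset Hi Hcv HS _ _.
  change (cv_infty (cvseq th)) in Hcv.
  exists (kseq th). split. apply kseq_incr.
  intros q'.
  set (Q := Qs th). set (ds := ds th).
  assert (HQ1 : forall n, (n + 1 <= Q n)%nat) by (intros; apply Qs_ge; auto).
  assert (HQ2 : forall n, (Q n + 1 + (n+2)^3 * (Q n + 1) <= Q (S n))%nat) by (intros; apply (Qs_gap th Hi n)).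
  assert (Hd3 : forall n, exists p : Z, INR (Q n) * th = IZR p + ds n) by (intros; eexists; apply ds_int; auto).
  assert (Hd4 : forall n, ds n <> 0) by (intros; apply ds_nz; auto).
  assert (Hd5 : forall n, Rabs (ds n) <= (/ (4 * (INR n + 1))) ^ (Q n)) by (intros; apply ds_upper; auto).
  assert (Hd6 : forall n, / (2 * INR (Q (S n))) <= Rabs (ds n)) by (intros; apply ds_lower; auto).
  change q' with Q.
  exists (fun u => forall j, Oset Q j u). split; [apply E2_dense|]. split.
  { exists (fun j => Oset Q j). split. intros; apply Oset_open. tauto. }
  intros u HE2.
  destruct (HE2 0%nat) as [[U HU] _].
  assert (HEu : forall J, exists n, (n >= J)%nat /\ Cnorm (u (Q n)) > / (INR n + 1)).
  { intros J. destruct (HE2 J) as [_ H]. exact H. }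
  set (lm := lam th).
  set (phi := fun z => Cmul lm (Fs Q (bN th Q u 1) z)).
  exists phi. split.
  {
    intros z. pose proof (Cnorm_ge0 z) as Hz0.
    set (pt := phi_term th Q u z).
    assert (HMJ := MJ_bN th Q ds HQ1 Hd3 Hd5 u U HU 1%nat (Cnorm z) Hz0).
    assert (Hex : ex_series (fun n => Cnorm (pt n))).
    { apply (@ex_series_le R_AbsRing R_CompleteNormedModule _ (mjt Q (bN th Q u 1) (Cnorm z))); auto.
      intros n. change (norm ?x) with (Rabs x). rewrite Rabs_pos_eq by apply Cnorm_ge0.
      unfold pt, phi_term, mjt. replace (Cmul (u (Q n)) (Csub C1 (Ce (INR (Q n) * th)))) with (bN th Q u 1 n).
      2:{ unfold bN, un. rewrite Nat.mul_1_l. unfold lam. rewrite Cpow_Ce. reflexivity. }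
      rewrite Cnorm_mul, Cnorm_pow. pose proof (pos_INR (Q n)). pose proof (Cnorm_ge0 (bN th Q u 1 n)).
      pose proof (pow_le (Cnorm z) (Q n) Hz0).
      assert (1 <= (INR (Q n) + 1)^2) by nra. assert (0 <= Cnorm (bN th Q u 1 n) * Cnorm z ^ Q n) by (apply Rmult_le_pos; auto). nra. }
    pose proof (CSer_spec pt Hex) as Hpt.
    assert (Hphi : phi z = Cmul (Cmul z (Ce th)) (CSer pt)).
    { unfold phi. replace (Fs Q (bN th Q u 1) z) with (Cmul z (CSer pt)).
      unfold lm, lam. generalize (CSer pt) (Ce th). intros; cring.
      symmetry. apply CSer_eq. eapply isC_ext. 2: apply (isC_scal z _ _ Hpt).
      intros n. unfold pt, phi_term, Fterm, bN, un. rewrite Nat.mul_1_l. unfold lam. rewrite Cpow_Ce.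
      change (Cpow z (S (Q n))) with (Cmul z (Cpow z (Q n))).
      generalize (u (Q n)) (Ce (INR (Q n) * th)) (Cpow z (Q n)). intros; cring. }
    rewrite Hphi. apply Ccv_scal. apply Ccv_of_isC. exact Hpt. }
  assert (HA : A_map th phi = Amap th Q u).
  { apply functional_extensionality. intros [w z]. unfold A_map, Amap, Tm, phi; simpl fst; simpl snd.
    unfold lm, lam. generalize (Fs Q (bN th Q u 1) z). intros; f_equal; cring. }
  cbv zeta. rewrite HA.
  pose proof (Tm_iter th Q ds HQ1 Hd3 Hd5 u U HU) as Hiter.
  split.
  {
    split. apply Tm_holo_ent. intros r Hr. apply (MJ_bN th Q ds HQ1 Hd3 Hd5 u U HU 1%nat r Hr).
    exists (Ginv th Q u). split. apply Tm_holo_ent. intros r Hr. apply (MJ_bI th Q ds HQ1 Hd3 Hd5 u U HU r Hr).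
    split. apply (Ginv_Amap th Q ds HQ1 Hd3 Hd5 u U HU). apply (Amap_Ginv th Q ds HQ1 Hd3 Hd5 u U HU). }
  split.
  {
    split.
    { intros [w z] Hp. unfold CxDisk, Amap, Tm in *; simpl in *. rewrite Cnorm_mul. unfold lam. rewrite Ce_norm. lra. }
    split.
    { intros p Hp. exists (Ginv th Q u p). split.
      destruct p as [w z]. unfold CxDisk, Ginv, Tm in *; simpl in *. rewrite Cnorm_mul. unfold mu. rewrite Ce_norm. lra.
      apply (Amap_Ginv th Q ds HQ1 Hd3 Hd5 u U HU). }
    exists (Psi Q u), (Phi Q u). split.
    - unfold biholo_of. split.
      { intros [w z] Hp. unfold CxDisk, Psi, Tm in *; simpl in *. rewrite C1z. auto. }
      split. { intros [w z] Hp. unfold CxDisk, Phi, Tm in *; simpl in *. rewrite C1z. auto. }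
      split. apply (Phi_Psi Q HQ1 u U HU).
      split. apply (Psi_Phi Q HQ1 u U HU).
      split. apply Tm_holo_disk. intros r Hr. apply (MJ_un Q HQ1 u U HU r Hr).
      apply Tm_holo_disk. intros r Hr. apply (MJ_bM Q HQ1 u U HU r Hr).
    - apply (conj_disk th Q HQ1 u U HU). }
  split.
  {
    intros [w z] Hp. unfold CxOut in Hp; simpl in Hp. split.
    - intros M. destruct (unbdd th Q ds HQ1 HQ2 Hd3 Hd4 Hd5 Hd6 u U HU w z M Hp HEu) as [N [HN _]].
      exists N. rewrite Hiter. eapply Rlt_le_trans. 2: apply C2norm_ge_fst. unfold Tm; simpl fst.
      rewrite Cnorm_mul, lam_norm, Rmult_1_l.
      pose proof (Cnorm_sub_ge (Fs Q (bN th Q u N) z) w).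
      replace (Cadd (Fs Q (bN th Q u N) z) w) with (Cadd w (Fs Q (bN th Q u N) z)) in H by (generalize (Fs Q (bN th Q u N) z); intros; cring).
      lra.
    - intros eps Heps N0. apply (recur th Q ds HQ1 HQ2 Hd3 Hd5 u U HU w z Hp eps Heps N0). }
  {
    intros [w z] Hp M. apply HS in Hp. unfold CxOut in Hp; simpl in Hp.
    destruct (unbdd th Q ds HQ1 HQ2 Hd3 Hd4 Hd5 Hd6 u U HU w z M Hp HEu) as [N [_ HN]].
    exists N, (Lmat (Cpow (lam th) N) (Fd Q (bN th Q u N) z)). split.
    - replace (Nat.iter N (Amap th Q u)) with (Tm Q (Cpow (lam th) N) (bN th Q u N)).
      apply Tm_deriv with (Cnorm z + 1). lra. apply (MJ_bN th Q ds HQ1 Hd3 Hd5 u U HU N). pose proof (Cnorm_ge0 z); lra.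
      apply functional_extensionality. intros p. symmetry. apply Hiter.
    - eapply Rlt_le_trans. 2: apply Mat2_norm_ge. rewrite Cnorm_mul, lam_norm, Rmult_1_l. lra. }
Qed.
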